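(* Let $M$ be a compact connected $1$-manifold (the circle $\mathrm{S}^1$ or a closed interval), and let $G$ be a group acting faithfully by homeomorphisms of $M$, generated by a finite symmetric set $\mathcal{G}$ (i.e. $\mathcal{G}=\mathcal{G}^{-1}$), with $|\mathcal{G}|\ge 2$. Let $\varepsilon > \log(|\mathcal{G}|-1)$. Then there is a homeomorphism $h$ of $M$ such that for every $g \in \mathcal{G}$, the homeomorphism $h g h^{-1}$ is Lipschitz with Lipschitz constant at most $e^{\varepsilon}$ (with respect to the standard metric of $M$, normalized to have total length $1$). In particular, $G$ is topologically conjugate to a group of Lipschitz homeomorphisms of $M$.
   Context: For $f\in G$, the word length $\|f\|$ is the minimal number of factors needed to write $f$ as a product of elements of $\mathcal{G}$ (with $\|id\|=0$). *)

(* Defs.v *)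
From Stdlib Require Export Reals List.
Export ListNotations.
Open Scope R_scope.

Inductive Manifold1 : Type := Circle | Interval.

(* Carrier: the circle S^1 = R/Z is represented by the fundamental domain [0,1);
   the closed interval by [0,1]. *)
Definition carrier_pred (M : Manifold1) (x : R) : Prop :=
  match M with
  | Circle => 0 <= x < 1
  | Interval => 0 <= x <= 1
  end.

Definition pt (M : Manifold1) : Type := { x : R | carrier_pred M x }.

(* Standard metric, total length 1: arc-length on the circle of length 1,
   usual distance on [0,1]. *)
Definition dist (M : Manifold1) (x y : pt M) : R :=
  match M with
  | Circle => Rmin (Rabs (proj1_sig x - proj1_sig y))
                   (1 - Rabs (proj1_sig x - proj1_sig y))
  | Interval => Rabs (proj1_sig x - proj1_sig y)
  end.

Definition continuous_on (M : Manifold1) (f : pt M -> pt M) : Prop :=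
  forall x (eps : R), 0 < eps -> exists delta, 0 < delta /\
    forall y, dist M x y < delta -> dist M (f x) (f y) < eps.

Definition inverse_of (M : Manifold1) (f g : pt M -> pt M) : Prop :=
  (forall x, g (f x) = x) /\ (forall x, f (g x) = x).

Definition is_homeo_with_inv (M : Manifold1) (f g : pt M -> pt M) : Prop :=
  inverse_of M f g /\ continuous_on M f /\ continuous_on M g.

Definition is_homeo (M : Manifold1) (f : pt M -> pt M) : Prop :=
  exists g, is_homeo_with_inv M f g.

Definition lipschitz_with (M : Manifold1) (L : R) (f : pt M -> pt M) : Prop :=
  forall x y, dist M (f x) (f y) <= L * dist M x y.

(* Main.v *)
From Coquelicot Require Import Coquelicot.
From Stdlib Require Import Reals Lra Lia Ranalysis5 Classical ClassicalEpsilon.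
Require Import Defs.
Open Scope R_scope.


Fixpoint sumk (n : nat) (F : nat -> R) : R :=
  match n with O => 0 | S m => sumk m F + F m end.

Lemma sumk_ext n F G : (forall j, (j < n)%nat -> F j = G j) -> sumk n F = sumk n G.
Proof. induction n; simpl; intros H; auto. rewrite IHn by (intros; apply H; lia). rewrite H by lia. auto. Qed.

Lemma sumk_plus n F G : sumk n F + sumk n G = sumk n (fun j => F j + G j).
Proof. induction n; simpl; [lra|]. rewrite <- IHn. lra. Qed.

Lemma sumk_le n F G : (forall j, (j < n)%nat -> F j <= G j) -> sumk n F <= sumk n G.
Proof. induction n; simpl; intros H; [lra|]. assert (F n <= G n) by (apply H; lia).
 assert (sumk n F <= sumk n G) by (apply IHn; intros; apply H; lia). lra. Qed.

Lemma sumk_const n c : sumk n (fun _ => c) = INR n * c.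
Proof. induction n; simpl sumk; [simpl; lra|]. rewrite IHn, S_INR. lra. Qed.

Lemma sumk_split n F s : (s < n)%nat ->
  sumk n F = F s + sumk n (fun j => if Nat.eqb s j then 0 else F j).
Proof.
  induction n; intros H; [lia|]. simpl.
  destruct (Nat.eq_dec s n) as [->|Hne].
  - rewrite Nat.eqb_refl.
    assert (E: sumk n (fun j => if Nat.eqb n j then 0 else F j) = sumk n F).
    { apply sumk_ext. intros j Hj. destruct (Nat.eqb_spec n j); [lia|auto]. }
    rewrite E. lra.
  - rewrite IHn by lia. destruct (Nat.eqb_spec s n); [lia|]. lra.
Qed.

Lemma sumk_count_le n s B (F : nat -> R) : (s < n)%nat ->
  (forall j, (j < n)%nat -> F j <= B) ->
  sumk n (fun j => if Nat.eqb s j then 0 else F j) <= (INR n - 1) * B.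
Proof.
  induction n; intros H HB; [lia|]. simpl sumk. rewrite S_INR.
  destruct (Nat.eq_dec s n) as [->|Hne].
  - rewrite Nat.eqb_refl.
    assert (E: sumk n (fun j => if Nat.eqb n j then 0 else F j) = sumk n F).
    { apply sumk_ext. intros j Hj. destruct (Nat.eqb_spec n j); [lia|auto]. }
    rewrite E.
    assert (sumk n F <= sumk n (fun _ => B)) by (apply sumk_le; intros; apply HB; lia).
    rewrite sumk_const in H0. lra.
  - assert (s < n)%nat by lia.
    specialize (IHn H0 (fun j Hj => HB j ltac:(lia))).
    destruct (Nat.eqb_spec s n); [lia|]. assert (F n <= B) by (apply HB; lia). lra.
Qed.

Definition oeq (f : option nat) (j : nat) : bool :=
  match f with Some x => Nat.eqb x j | None => false end.


Fixpoint Rw {A : Type} (k : nat) (act : nat -> A -> A) (inv : nat -> nat) (c : A -> R)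
  (n : nat) (f : option nat) (a : A) : R :=
  match n with
  | O => c a
  | S m => sumk k (fun j => if oeq f j then 0 else Rw k act inv c m (Some (inv j)) (act j a))
  end.

Lemma Rw_rel {A : Type} k act inv (rel : A -> A -> A -> Prop) c1 c2 c3 :
  (forall j a b g, (j < k)%nat -> rel a b g -> rel (act j a) (act j b) (act j g)) ->
  (forall a b g, rel a b g -> c1 a + c2 b = c3 g) ->
  forall n f a b g, rel a b g ->
  Rw k act inv c1 n f a + Rw k act inv c2 n f b = Rw k act inv c3 n f g.
Proof.
  intros Hact Hc n. induction n; intros f a b g Hr; simpl; auto.
  rewrite sumk_plus. apply sumk_ext. intros j Hj. destruct (oeq f j); [lra|].
  apply IHn. apply Hact; auto.
Qed.

Lemma Rw_nonneg {A : Type} k act inv (c : A -> R) :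
  (forall a, 0 <= c a) -> forall n f a, 0 <= Rw k act inv c n f a.
Proof.
  intros Hc n. induction n; intros f a; simpl; auto.
  apply Rle_trans with (sumk k (fun _ => 0)). rewrite sumk_const; lra.
  apply sumk_le. intros j _. destruct (oeq f j); [lra|apply IHn].
Qed.

Lemma Rw_bound_some {A : Type} k act inv (c : A -> R) :
  (forall j, (j < k)%nat -> (inv j < k)%nat) ->
  (forall a, c a <= 1) -> forall n x a, (x < k)%nat ->
  Rw k act inv c n (Some x) a <= (INR k - 1) ^ n.
Proof.
  intros Hinv Hc n. induction n; intros x a Hx; simpl; auto.
  apply Rle_trans with ((INR k - 1) * (INR k - 1) ^ n); [|lra].
  apply sumk_count_le; [auto|]. intros j Hj. apply IHn. auto.
Qed.

Lemma Rw_bound_none {A : Type} k act inv (c : A -> R) :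
  (2 <= k)%nat ->
  (forall j, (j < k)%nat -> (inv j < k)%nat) ->
  (forall a, c a <= 1) -> forall n a,
  Rw k act inv c n None a <= INR k * (INR k - 1) ^ n.
Proof.
  intros Hk Hinv Hc n a. assert (2 <= INR k) by (apply (le_INR 2); auto).
  destruct n; simpl.
  - specialize (Hc a). lra.
  - apply Rle_trans with (sumk k (fun _ => (INR k - 1) ^ n)).
    + apply sumk_le. intros j Hj. apply Rw_bound_some; auto.
    + rewrite sumk_const. assert (0 <= (INR k - 1) ^ n) by (apply pow_le; lra).
      assert (0 <= INR k * (INR k - 1) ^ n * (INR k - 2)) by
        (apply Rmult_le_pos; [apply Rmult_le_pos|]; lra).
      nra.
Qed.

Lemma ex_geom_bound (u : nat -> R) C r :
  0 <= r < 1 -> (forall n, 0 <= u n <= C * r ^ n) -> ex_series u.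
Proof.
  intros Hr Hu. apply (ex_series_le u (fun n => C * r ^ n)).
  - intros n. change (norm (u n)) with (Rabs (u n)). rewrite Rabs_pos_eq; apply Hu.
  - apply (ex_series_scal_l C (fun n => r ^ n)). apply ex_series_geom. rewrite Rabs_pos_eq; lra.
Qed.

Lemma Series_nonneg (u : nat -> R) : (forall n, 0 <= u n) -> ex_series u -> 0 <= Series u.
Proof.
  intros H Hex. assert (E: Series (fun n => 0 * u n) = 0).
  { rewrite Series_scal_l. lra. }
  rewrite <- E. apply Series_le; auto. intros n. split; [lra|]. specialize (H n). lra.
Qed.

Lemma Series_ge_first (u : nat -> R) : (forall n, 0 <= u n) -> ex_series u -> u O <= Series u.
Proof.
  intros H Hex. rewrite Series_incr_1 by auto.
  assert (0 <= Series (fun k => u (S k))). apply Series_nonneg; auto.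
  apply ex_series_incr_1 in Hex. auto. lra.
Qed.

Definition valid (k : nat) (f : option nat) : Prop :=
  match f with None => True | Some x => (x < k)%nat end.

Record hyps {A : Type} (k : nat) (act : nat -> A -> A) (inv : nat -> nat) (c : A -> R) (q : R) := {
  h_k : (2 <= k)%nat;
  h_inv : forall j, (j < k)%nat -> (inv j < k)%nat;
  h_c0 : forall a, 0 <= c a;
  h_c1 : forall a, c a <= 1;
  h_q : 0 < q <= 1;
  h_qk : q * (INR k - 1) < 1 }.

Lemma Rw_bound {A : Type} k act inv (c : A -> R) q : hyps k act inv c q ->
  forall n f a, valid k f -> 0 <= Rw k act inv c n f a <= INR k * (INR k - 1) ^ n.
Proof.
  intros H n f a Hf. split. apply Rw_nonneg, (h_c0 _ _ _ _ _ H).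
  destruct f as [x|].
  - apply Rle_trans with ((INR k - 1) ^ n). apply Rw_bound_some; auto.
    apply (h_inv _ _ _ _ _ H). apply (h_c1 _ _ _ _ _ H).
    assert (2 <= INR k) by (apply (le_INR 2); apply (h_k _ _ _ _ _ H)).
    assert (0 <= (INR k - 1) ^ n) by (apply pow_le; lra). nra.
  - apply Rw_bound_none. apply (h_k _ _ _ _ _ H). apply (h_inv _ _ _ _ _ H). apply (h_c1 _ _ _ _ _ H).
Qed.

Lemma Rw_term_bound {A : Type} k act inv (c : A -> R) q : hyps k act inv c q ->
  forall n f a, valid k f -> 0 <= q ^ n * Rw k act inv c n f a <= INR k * (q * (INR k - 1)) ^ n.
Proof.
  intros H n f a Hf. pose proof (Rw_bound _ _ _ _ _ H n f a Hf).
  pose proof (h_q _ _ _ _ _ H). assert (0 <= q ^ n) by (apply pow_le; lra).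
  rewrite Rpow_mult_distr. split. apply Rmult_le_pos; lra. nra.
Qed.

Lemma Rw_ex {A : Type} k act inv (c : A -> R) q : hyps k act inv c q ->
  forall f a, valid k f -> ex_series (fun n => q ^ n * Rw k act inv c n f a).
Proof.
  intros H f a Hf. apply (ex_geom_bound _ (INR k) (q * (INR k - 1))).
  pose proof (h_q _ _ _ _ _ H). pose proof (h_qk _ _ _ _ _ H).
  assert (2 <= INR k) by (apply (le_INR 2); apply (h_k _ _ _ _ _ H)). split; [nra|lra].
  intros n; apply (Rw_term_bound _ _ _ _ _ H); auto.
Qed.

Definition Dser {A : Type} k act inv (c : A -> R) q (a : A) : R :=
  Series (fun n => q ^ n * Rw k act inv c n None a).

Lemma Dser_nonneg {A : Type} k act inv (c : A -> R) q : hyps k act inv c q ->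
  forall a, 0 <= Dser k act inv c q a.
Proof.
  intros H a. apply Series_nonneg. intros n; apply (Rw_term_bound _ _ _ _ _ H); simpl; auto.
  apply (Rw_ex _ _ _ _ _ H). simpl; auto.
Qed.

Lemma Dser_ge_c {A : Type} k act inv (c : A -> R) q : hyps k act inv c q ->
  forall a, c a <= Dser k act inv c q a.
Proof.
  intros H a. unfold Dser. pose proof (Series_ge_first (fun n => q ^ n * Rw k act inv c n None a)).
  simpl in H0. rewrite Rmult_1_l in H0. apply H0.
  intros n; apply (Rw_term_bound _ _ _ _ _ H); simpl; auto.
  apply (Rw_ex _ _ _ _ _ H). simpl; auto.
Qed.

Lemma Dser_rel {A : Type} k act inv (rel : A -> A -> A -> Prop) c1 c2 c3 q :
  hyps k act inv c1 q -> hyps k act inv c2 q -> hyps k act inv c3 q ->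
  (forall j a b g, (j < k)%nat -> rel a b g -> rel (act j a) (act j b) (act j g)) ->
  (forall a b g, rel a b g -> c1 a + c2 b = c3 g) ->
  forall a b g, rel a b g ->
  Dser k act inv c1 q a + Dser k act inv c2 q b = Dser k act inv c3 q g.
Proof.
  intros H1 H2 H3 Hact Hc a b g Hr. unfold Dser. rewrite <- Series_plus.
  apply Series_ext. intros n. rewrite <- (Rw_rel k act inv rel c1 c2 c3 Hact Hc n None a b g Hr). ring.
  apply (Rw_ex _ _ _ _ _ H1); simpl; auto. apply (Rw_ex _ _ _ _ _ H2); simpl; auto.
Qed.

Lemma Dser_act {A : Type} k act inv (c : A -> R) q : hyps k act inv c q ->
  forall s, (s < k)%nat -> inv (inv s) = s -> (forall a, act (inv s) (act s a) = a) ->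
  forall a, Dser k act inv c q (act s a) <= / q * Dser k act inv c q a.
Proof.
  intros H s Hs Hii Hact a.
  pose proof (h_q _ _ _ _ _ H) as Hq.
  assert (Hiv : (inv s < k)%nat) by (apply (h_inv _ _ _ _ _ H); auto).
  set (P := fun m => Rw k act inv c m (Some (inv s)) (act s a)).
  set (Q := fun m => Rw k act inv c m (Some s) a).
  assert (Ea : forall n, Rw k act inv c (S n) None a = P n + Q (S n)).
  { intros n. simpl. rewrite (sumk_split _ _ s Hs). reflexivity. }
  assert (Ec : forall n, Rw k act inv c (S n) None (act s a) = Q n + P (S n)).
  { intros n. simpl. rewrite (sumk_split _ _ (inv s) Hiv). simpl oeq.
    rewrite Hii, Hact. reflexivity. }
  assert (exP : ex_series (fun n => q ^ n * P n)) by (apply (Rw_ex _ _ _ _ _ H); simpl; auto).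
  assert (exQ : ex_series (fun n => q ^ n * Q n)) by (apply (Rw_ex _ _ _ _ _ H); simpl; auto).
  assert (exP1 : ex_series (fun n => q ^ S n * P (S n))) by (apply ex_series_incr_1 in exP; auto).
  assert (exQ1 : ex_series (fun n => q ^ S n * Q (S n))) by (apply ex_series_incr_1 in exQ; auto).
  assert (exD1 : ex_series (fun n => q ^ S n * Rw k act inv c (S n) None a)).
  { pose proof (Rw_ex _ _ _ _ _ H None a I) as X. apply ex_series_incr_1 in X; auto. }
  assert (exD1' : ex_series (fun n => q ^ S n * Rw k act inv c (S n) None (act s a))).
  { pose proof (Rw_ex _ _ _ _ _ H None (act s a) I) as X. apply ex_series_incr_1 in X; auto. }
  assert (sP : Series (fun n => q ^ n * P n) = P O + Series (fun n => q ^ S n * P (S n))).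
  { rewrite Series_incr_1 by auto. simpl. ring. }
  assert (sQ : Series (fun n => q ^ n * Q n) = Q O + Series (fun n => q ^ S n * Q (S n))).
  { rewrite Series_incr_1 by auto. simpl. ring. }
  assert (E1 : Dser k act inv c q (act s a) = Series (fun n => q ^ n * P n) + q * Series (fun n => q ^ n * Q n)).
  { unfold Dser. rewrite Series_incr_1 by (apply (Rw_ex _ _ _ _ _ H); simpl; auto).
    rewrite (Series_ext _ (fun n => q * (q ^ n * Q n) + q ^ S n * P (S n))).
    2:{ intros n. rewrite Ec. simpl. ring. }
    rewrite Series_plus. rewrite Series_scal_l. rewrite sP. simpl. unfold P. simpl. ring.
    apply (ex_series_scal_l q (fun n => q ^ n * Q n)) in exQ. exact exQ. exact exP1. }
  assert (E2 : Dser k act inv c q a = q * Series (fun n => q ^ n * P n) + Series (fun n => q ^ n * Q n)).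
  { unfold Dser. rewrite Series_incr_1 by (apply (Rw_ex _ _ _ _ _ H); simpl; auto).
    rewrite (Series_ext _ (fun n => q * (q ^ n * P n) + q ^ S n * Q (S n))).
    2:{ intros n. rewrite Ea. simpl. ring. }
    rewrite Series_plus. rewrite Series_scal_l. rewrite sQ. simpl. unfold Q. simpl. ring.
    apply (ex_series_scal_l q (fun n => q ^ n * P n)) in exP. exact exP. exact exQ1. }
  rewrite E1, E2.
  assert (0 <= Series (fun n => q ^ n * Q n)).
  { apply Series_nonneg; auto. intros n. apply (Rw_term_bound _ _ _ _ _ H); simpl; auto. }
  assert (q <= / q). { apply Rle_trans with 1. lra. rewrite <- Rinv_1. apply Rinv_le_contravar; lra. }
  rewrite Rmult_plus_distr_l. rewrite <- Rmult_assoc, Rinv_l by lra. nra.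
Qed.

Lemma common_delta (m : nat) (P : nat -> R -> Prop) :
  (forall j d1 d2, 0 < d1 <= d2 -> P j d2 -> P j d1) ->
  (forall j, (j < m)%nat -> exists d, 0 < d /\ P j d) ->
  exists d, 0 < d /\ forall j, (j < m)%nat -> P j d.
Proof.
  intros Hmon. induction m; intros H.
  - exists 1. split; [lra|]. intros; lia.
  - destruct IHm as [d1 [Hd1 H1]]. intros j Hj; apply H; lia.
    destruct (H m) as [d2 [Hd2 H2]]. lia.
    exists (Rmin d1 d2). split. apply Rmin_glb_lt; auto.
    intros j Hj. destruct (Nat.eq_dec j m) as [->|].
    + apply (Hmon m _ d2); auto. split. apply Rmin_glb_lt; auto. apply Rmin_r.
    + apply (Hmon j _ d1). split. apply Rmin_glb_lt; auto. apply Rmin_l. apply H1; lia.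
Qed.

Lemma sumk_lt n F e : (0 < n)%nat -> (forall j, (j < n)%nat -> F j <= e) -> 0 < e ->
  sumk n F < INR n * e + e.
Proof.
  intros Hn H He. assert (sumk n F <= sumk n (fun _ => e)) by (apply sumk_le; auto).
  rewrite sumk_const in H0. lra.
Qed.


Lemma Rw_small {A X : Type} k act inv (c : A -> R) q (pj : nat -> X -> X)
  (N : X -> R -> A -> Prop) : hyps k act inv c q ->
  (forall x d1 d2 a, 0 < d1 <= d2 -> N x d1 a -> N x d2 a) ->
  (forall x e, 0 < e -> exists d, 0 < d /\ forall a, N x d a -> c a < e) ->
  (forall j x e, (j < k)%nat -> 0 < e -> exists d, 0 < d /\ forall a, N x d a -> N (pj j x) e (act j a)) ->
  forall n f x e, 0 < e -> exists d, 0 < d /\ forall a, N x d a -> Rw k act inv c n f a < e.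
Proof.
  intros H Hmon Hc Hact n. induction n; intros f x e He.
  - simpl. apply Hc; auto.
  - assert (Hk : 2 <= INR k) by (apply (le_INR 2); apply (h_k _ _ _ _ _ H)).
    set (e' := e / (INR k + 1)).
    assert (He' : 0 < e') by (unfold e'; apply Rdiv_lt_0_compat; lra).
    destruct (common_delta k (fun j d => forall a, N x d a ->
        (if oeq f j then 0 else Rw k act inv c n (Some (inv j)) (act j a)) < e')) as [d [Hd Hall]].
    + intros j d1 d2 Hd12 HP a Ha. apply HP. eapply Hmon; eauto.
    + intros j Hj. destruct (IHn (Some (inv j)) (pj j x) e' He') as [d1 [Hd1 H1]].
      destruct (Hact j x d1 Hj Hd1) as [d2 [Hd2 H2]].
      exists d2. split; auto. intros a Ha. destruct (oeq f j); auto.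
    + exists d. split; auto. intros a Ha. simpl.
      apply Rlt_le_trans with (INR k * e' + e').
      apply sumk_lt. pose proof (h_k _ _ _ _ _ H); lia. intros j Hj. left. apply Hall; auto. auto.
      unfold e'. right. field. lra.
Qed.

Lemma sum_f_sumk u n : sum_f_R0 u n = sumk (S n) u.
Proof. induction n; simpl; [lra|]. rewrite IHn. simpl. lra. Qed.

Lemma pow_le_one x n : 0 <= x <= 1 -> x ^ n <= 1.
Proof. intros H. induction n; simpl; [lra|]. assert (0 <= x ^ n) by (apply pow_le; lra). nra. Qed.

Lemma Dser_small {A X : Type} k act inv (c : A -> R) q (pj : nat -> X -> X)
  (N : X -> R -> A -> Prop) : hyps k act inv c q ->
  (forall x d1 d2 a, 0 < d1 <= d2 -> N x d1 a -> N x d2 a) ->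
  (forall x e, 0 < e -> exists d, 0 < d /\ forall a, N x d a -> c a < e) ->
  (forall j x e, (j < k)%nat -> 0 < e -> exists d, 0 < d /\ forall a, N x d a -> N (pj j x) e (act j a)) ->
  forall x e, 0 < e -> exists d, 0 < d /\ forall a, N x d a -> Dser k act inv c q a < e.
Proof.
  intros H Hmon Hc Hact x e He.
  pose proof (h_q _ _ _ _ _ H) as Hq. pose proof (h_qk _ _ _ _ _ H) as Hqk.
  assert (Hk : 2 <= INR k) by (apply (le_INR 2); apply (h_k _ _ _ _ _ H)).
  set (r := q * (INR k - 1)).
  assert (Hr : 0 <= r < 1) by (unfold r; split; nra).
  destruct (pow_lt_1_zero r ltac:(rewrite Rabs_pos_eq; lra) (e / 4 * (1 - r) / INR k)) as [M0 HM0].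
  { apply Rdiv_lt_0_compat; [|lra]. apply Rmult_lt_0_compat; lra. }
  set (M := S M0).
  assert (HrM : INR k * r ^ M / (1 - r) <= e / 4).
  { pose proof (HM0 M ltac:(unfold M; lia)) as HX. rewrite Rabs_pos_eq in HX by (apply pow_le; lra).
    apply Rmult_le_reg_r with (1 - r). lra. unfold Rdiv. rewrite Rmult_assoc, Rinv_l, Rmult_1_r by lra.
    apply Rmult_le_reg_r with (/ INR k). apply Rinv_0_lt_compat; lra.
    rewrite Rmult_comm, <- Rmult_assoc, Rinv_l, Rmult_1_l by lra. left.
    replace (e * / 4 * (1 - r) * / INR k) with (e / 4 * (1 - r) / INR k) by (unfold Rdiv; ring). auto. }
  set (e' := e / 4 / INR M).
  assert (HM : 0 < INR M) by (apply lt_0_INR; unfold M; lia).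
  assert (He' : 0 < e') by (unfold e'; apply Rdiv_lt_0_compat; lra).
  destruct (common_delta M (fun j d => forall a, N x d a -> Rw k act inv c j None a < e')) as [d [Hd Hall]].
  - intros j d1 d2 Hd12 HP a Ha. apply HP. eapply Hmon; eauto.
  - intros j Hj. eapply Rw_small; eauto.
  - exists d. split; auto. intros a Ha. unfold Dser.
    set (u := fun n => q ^ n * Rw k act inv c n None a).
    assert (Hex : ex_series u) by (apply (Rw_ex _ _ _ _ _ H); simpl; auto).
    rewrite (Series_incr_n u M) by (unfold M; lia || auto).
    assert (S1 : sum_f_R0 u (Init.Nat.pred M) <= INR M * e').
    { rewrite sum_f_sumk. replace (S (Init.Nat.pred M)) with M by (unfold M; simpl; lia).
      apply Rle_trans with (sumk M (fun _ => e')). apply sumk_le. intros j Hj.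
      unfold u. pose proof (Hall j Hj a Ha).
      assert (0 <= Rw k act inv c j None a) by (apply (Rw_bound _ _ _ _ _ H); simpl; auto).
      assert (0 <= q ^ j <= 1). split. apply pow_le; lra. apply pow_le_one; lra. nra.
      rewrite sumk_const. lra. }
    assert (S2 : Series (fun k0 => u (M + k0)%nat) <= INR k * r ^ M / (1 - r)).
    { apply Rle_trans with (Series (fun n => (INR k * r ^ M) * r ^ n)).
      - apply Series_le. intros n. unfold u. pose proof (Rw_term_bound _ _ _ _ _ H (M + n) None a I).
        fold r in H0. rewrite (pow_add r) in H0. split; [apply H0|]. rewrite Rmult_assoc. apply H0.
        apply (ex_series_scal_l (INR k * r ^ M) (fun n => r ^ n)). apply ex_series_geom.
        rewrite Rabs_pos_eq; lra.
      - rewrite Series_scal_l. rewrite Series_geom by (rewrite Rabs_pos_eq; lra). right. unfold Rdiv. ring. }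
    assert (INR M * e' = e / 4) by (unfold e'; field; lra). lra.
Qed.

Lemma cont_pt_of (f : R -> R) x0 :
  (forall e, 0 < e -> exists d, 0 < d /\ forall x, Rabs (x - x0) < d -> Rabs (f x - f x0) < e) ->
  continuity_pt f x0.
Proof.
  intros H. unfold continuity_pt, continue_in, limit1_in, limit_in. intros e He.
  destruct (H e He) as [d [Hd Hx]]. exists d. split; auto.
  intros x [_ Hxd]. simpl in *. unfold Rdist in *. apply Hx; auto.
Qed.

Definition cl (t : R) := Rmax 0 (Rmin 1 t).

Lemma cl_range t : 0 <= cl t <= 1.
Proof. unfold cl, Rmax, Rmin. repeat destruct Rle_dec; lra. Qed.

Lemma cl_id t : 0 <= t <= 1 -> cl t = t.
Proof. intros. unfold cl, Rmax, Rmin. repeat destruct Rle_dec; lra. Qed.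

Lemma cl_lip t s : Rabs (cl t - cl s) <= Rabs (t - s).
Proof. unfold cl, Rmax, Rmin. repeat destruct Rle_dec; repeat (destruct Rabs_spec as [[? ?]|[? ?]]); try lra;
  unfold Rabs; repeat destruct Rcase_abs; lra. Qed.

Lemma inj_cont_mono (f : R -> R) a b :
  (forall t, a <= t <= b -> forall e, 0 < e -> exists d, 0 < d /\
     forall t', a <= t' <= b -> Rabs (t' - t) < d -> Rabs (f t' - f t) < e) ->
  (forall x y, a <= x <= b -> a <= y <= b -> f x = f y -> x = y) ->
  forall x y x' y', a <= x -> x < y -> y <= b -> a <= x' -> x' < y' -> y' <= b ->
  f x < f y -> f x' < f y'.
Proof.
  intros Hc Hinj x y x' y' H1 H2 H3 H4 H5 H6 Hf.
  destruct (Rtotal_order (f x') (f y')) as [Hl|[He|Hg]]; auto.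
  - apply Hinj in He; lra.
  - exfalso.
    set (X := fun t => x + cl t * (x' - x)).
    set (Y := fun t => y + cl t * (y' - y)).
    assert (HX : forall t, a <= X t <= b).
    { intros t. pose proof (cl_range t). unfold X. split; nra. }
    assert (HY : forall t, a <= Y t <= b).
    { intros t. pose proof (cl_range t). unfold Y. split; nra. }
    set (psi := fun t => f (X t) - f (Y t)).
    assert (HL : forall t s, Rabs (X t - X s) <= Rabs (x' - x) * Rabs (t - s)).
    { intros t s. unfold X. replace (x + cl t * (x' - x) - (x + cl s * (x' - x))) with ((cl t - cl s) * (x' - x)) by ring.
      rewrite Rabs_mult. rewrite Rmult_comm. apply Rmult_le_compat_l. apply Rabs_pos. apply cl_lip. }
    assert (HL' : forall t s, Rabs (Y t - Y s) <= Rabs (y' - y) * Rabs (t - s)).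
    { intros t s. unfold Y. replace (y + cl t * (y' - y) - (y + cl s * (y' - y))) with ((cl t - cl s) * (y' - y)) by ring.
      rewrite Rabs_mult. rewrite Rmult_comm. apply Rmult_le_compat_l. apply Rabs_pos. apply cl_lip. }
    destruct (IVT_interv psi 0 1) as [z [Hz Hpz]].
    + intros t _. apply cont_pt_of. intros e He.
      destruct (Hc (X t) (HX t) (e / 2)) as [d1 [Hd1 Hd1']]. lra.
      destruct (Hc (Y t) (HY t) (e / 2)) as [d2 [Hd2 Hd2']]. lra.
      set (L := Rabs (x' - x) + Rabs (y' - y) + 1).
      assert (HL0 : 0 < L) by (unfold L; pose proof (Rabs_pos (x'-x)); pose proof (Rabs_pos (y'-y)); lra).
      exists (Rmin d1 d2 / L). split. apply Rdiv_lt_0_compat; auto. apply Rmin_glb_lt; auto.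
      intros t' Ht'.
      assert (Hm : Rabs (t' - t) * L < Rmin d1 d2).
      { apply Rmult_lt_reg_r with (/ L). apply Rinv_0_lt_compat; auto.
        rewrite Rmult_assoc, Rinv_r, Rmult_1_r by lra. exact Ht'. }
      pose proof (Rmin_l d1 d2). pose proof (Rmin_r d1 d2).
      pose proof (Rabs_pos (t' - t)). pose proof (Rabs_pos (x'-x)). pose proof (Rabs_pos (y'-y)).
      assert (HX1 : Rabs (X t' - X t) < d1).
      { apply Rle_lt_trans with (Rabs (x' - x) * Rabs (t' - t)). apply HL. unfold L in Hm. nra. }
      assert (HY1 : Rabs (Y t' - Y t) < d2).
      { apply Rle_lt_trans with (Rabs (y' - y) * Rabs (t' - t)). apply HL'. unfold L in Hm. nra. }
      specialize (Hd1' (X t') (HX t') HX1). specialize (Hd2' (Y t') (HY t') HY1).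
      unfold psi. replace (f (X t') - f (Y t') - (f (X t) - f (Y t))) with
        ((f (X t') - f (X t)) - (f (Y t') - f (Y t))) by ring.
      eapply Rle_lt_trans. apply Rabs_triang. rewrite Rabs_Ropp. lra.
    + lra.
    + unfold psi, X, Y. rewrite cl_id by lra. replace (x + 0 * (x' - x)) with x by ring.
      replace (y + 0 * (y' - y)) with y by ring. lra.
    + unfold psi, X, Y. rewrite cl_id by lra. replace (x + 1 * (x' - x)) with x' by ring.
      replace (y + 1 * (y' - y)) with y' by ring. lra.
    + assert (f (X z) = f (Y z)) by (unfold psi in Hpz; lra).
      apply Hinj in H; auto. unfold X, Y in H. rewrite cl_id in H by lra.
      assert (0 <= (1 - z) * (y - x)) by (apply Rmult_le_pos; lra).
      assert (0 <= z * (y' - x')) by (apply Rmult_le_pos; lra).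
      destruct (Req_dec z 0) as [->|Hz0]. lra.
      assert (0 < z * (y' - x')) by (apply Rmult_lt_0_compat; lra). nra.
Qed.

Lemma inj_cont_dich (f : R -> R) a b : a < b ->
  (forall t, a <= t <= b -> forall e, 0 < e -> exists d, 0 < d /\
     forall t', a <= t' <= b -> Rabs (t' - t) < d -> Rabs (f t' - f t) < e) ->
  (forall x y, a <= x <= b -> a <= y <= b -> f x = f y -> x = y) ->
  (forall x y, a <= x -> x < y -> y <= b -> f x < f y) \/
  (forall x y, a <= x -> x < y -> y <= b -> f y < f x).
Proof.
  intros Hab Hc Hinj.
  destruct (Rtotal_order (f a) (f b)) as [Hl|[He|Hg]].
  - left. intros x y H1 H2 H3. apply (inj_cont_mono f a b Hc Hinj a b x y); lra.
  - apply Hinj in He; lra.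
  - right. intros x y H1 H2 H3. destruct (Rtotal_order (f y) (f x)) as [?|[He|?]]; auto.
    + apply Hinj in He; lra.
    + exfalso. assert (f a < f b).
      { apply (inj_cont_mono f a b Hc Hinj x y a b); lra. } lra.
Qed.

Definition lamR (a b : R) : R := if Rle_dec a b then b - a else b - a + 1.
Definition I01 (a : R) := 0 <= a < 1.

Ltac lamc := unfold lamR in *; repeat match goal with
  | |- context [Rle_dec ?a ?b] => destruct (Rle_dec a b)
  | H : context [Rle_dec ?a ?b] |- _ => destruct (Rle_dec a b) end.

Lemma lamR_range a b : I01 a -> I01 b -> 0 <= lamR a b < 1.
Proof. unfold I01; intros; lamc; lra. Qed.

Lemma lamR_0 a : lamR a a = 0.
Proof. lamc; lra. Qed.

Lemma lamR_compl a b : a <> b -> lamR a b + lamR b a = 1.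
Proof. intros; lamc; lra. Qed.

Lemma lamR_pos a b : a <> b -> I01 a -> I01 b -> 0 < lamR a b.
Proof. unfold I01; intros; lamc; lra. Qed.

Lemma lamR_dist a b : I01 a -> I01 b ->
  Rmin (Rabs (a - b)) (1 - Rabs (a - b)) = Rmin (lamR a b) (lamR b a).
Proof.
  unfold I01; intros. unfold Rmin, Rabs. lamc;
  repeat match goal with |- context [Rcase_abs ?x] => destruct (Rcase_abs x) end;
  repeat match goal with |- context [Rle_dec ?a ?b] => destruct (Rle_dec a b) end; lra.
Qed.

Lemma lamR_shift a b a' b' : I01 a -> I01 b -> I01 a' -> I01 b' ->
  ((b - a) - (b' - a') = 0 \/ (b - a) - (b' - a') = 1 \/ (b - a) - (b' - a') = -1) ->
  lamR a b = lamR a' b'.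
Proof. unfold I01; intros; lamc; lra. Qed.

Definition cycR a b c := lamR a b <= lamR a c.

Lemma cycR_add a b c : I01 a -> I01 b -> I01 c -> cycR a b c -> lamR a b + lamR b c = lamR a c.
Proof. unfold I01, cycR; intros; lamc; lra. Qed.

Lemma cycR_incr (F : R -> R) :
  (forall x y, I01 x -> I01 y -> x < y -> F x < F y) ->
  (forall x, I01 x -> I01 (F x)) ->
  forall a b c, I01 a -> I01 b -> I01 c -> cycR a b c -> cycR (F a) (F b) (F c).
Proof.
  intros HF HR a b c Ha Hb Hc H.
  pose proof (HR a Ha). pose proof (HR b Hb). pose proof (HR c Hc). unfold I01 in *.
  assert (Hm : forall x y, I01 x -> I01 y -> (x < y -> F x < F y) /\ (x = y -> F x = F y) /\ (y < x -> F y < F x)).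
  { intros x y Hx Hy. split; [|split]; intros; subst; auto. }
  destruct (Hm a b Ha Hb) as [Hab1 [Hab2 Hab3]].
  destruct (Hm a c Ha Hc) as [Hac1 [Hac2 Hac3]].
  destruct (Hm b c Hb Hc) as [Hbc1 [Hbc2 Hbc3]].
  unfold cycR in *.
  destruct (Rtotal_order a b) as [?|[?|?]];
  destruct (Rtotal_order a c) as [?|[?|?]];
  destruct (Rtotal_order b c) as [?|[?|?]];
  repeat match goal with | H : ?P, H' : ?P -> ?Q |- _ => specialize (H' H) end;
  lamc; lra.
Qed.

Definition Rf (t : R) := if Rle_dec t 0 then 0 else 1 - t.

Lemma Rf_rev a b c : I01 a -> I01 b -> I01 c -> cycR a b c -> cycR (Rf c) (Rf b) (Rf a).
Proof. unfold I01, cycR, Rf; intros. lamc; lra. Qed.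

Lemma cycR_incr0 (F : R -> R) :
  F 0 = 0 -> (forall x, 0 < x < 1 -> 0 < F x < 1) ->
  (forall x y, 0 < x -> x < y -> y < 1 -> F x < F y) ->
  forall a b c, I01 a -> I01 b -> I01 c -> cycR a b c -> cycR (F a) (F b) (F c).
Proof.
  intros H0 H1 H2. apply cycR_incr.
  - unfold I01. intros x y Hx Hy Hxy. destruct (Req_dec x 0) as [->|].
    + rewrite H0. apply H1; lra.
    + apply H2; lra.
  - unfold I01. intros x Hx. destruct (Req_dec x 0) as [->|]. rewrite H0; lra.
    pose proof (H1 x ltac:(lra)); lra.
Qed.

Lemma cycR_decr0 (F : R -> R) :
  F 0 = 0 -> (forall x, 0 < x < 1 -> 0 < F x < 1) ->
  (forall x y, 0 < x -> x < y -> y < 1 -> F y < F x) ->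
  forall a b c, I01 a -> I01 b -> I01 c -> cycR a b c -> cycR (F c) (F b) (F a).
Proof.
  intros H0 H1 H2 a b c Ha Hb Hc H.
  assert (HR : forall t, I01 t -> I01 (Rf t)) by (unfold I01, Rf; intros; destruct Rle_dec; lra).
  assert (HRR : forall t, I01 t -> Rf (Rf t) = t).
  { unfold I01, Rf; intros. repeat destruct Rle_dec; lra. }
  assert (E : forall t, I01 t -> F t = F (Rf (Rf t))) by (intros; rewrite HRR; auto).
  rewrite (E a), (E b), (E c) by auto.
  apply (cycR_incr0 (fun t => F (Rf t))); auto.
  - unfold Rf. destruct Rle_dec; [auto|lra].
  - intros x Hx. unfold Rf. destruct Rle_dec; [lra|]. apply H1; lra.
  - intros x y Hx Hxy Hy. unfold Rf. repeat destruct Rle_dec; try lra. apply H2; lra.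
  - apply Rf_rev; auto.
Qed.

Definition vI (x : pt Interval) : R := proj1_sig x.

Lemma ptI_eq (x y : pt Interval) : vI x = vI y -> x = y.
Proof. destruct x, y. unfold vI; simpl. intros ->. f_equal. apply proof_irrelevance. Qed.

Lemma vI_range x : 0 <= vI x <= 1.
Proof. destruct x; simpl; auto. Qed.

Definition embI (t : R) : pt Interval := exist _ (cl t) (cl_range t).

Lemma embI_v x : embI (vI x) = x.
Proof. apply ptI_eq. unfold embI, vI at 1. simpl. apply cl_id, vI_range. Qed.

Lemma vI_embI t : 0 <= t <= 1 -> vI (embI t) = t.
Proof. intros. unfold vI, embI; simpl. apply cl_id; auto. Qed.

Lemma distI x y : dist Interval x y = Rabs (vI x - vI y).
Proof. reflexivity. Qed.

Lemma homeoI_mono (g gi : pt Interval -> pt Interval) :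
  inverse_of Interval g gi -> continuous_on Interval g ->
  (forall x y, vI x < vI y -> vI (g x) < vI (g y)) \/
  (forall x y, vI x < vI y -> vI (g y) < vI (g x)).
Proof.
  intros [Hl Hr] Hc.
  set (F := fun t => vI (g (embI t))).
  assert (HF : (forall x y, 0 <= x -> x < y -> y <= 1 -> F x < F y) \/
               (forall x y, 0 <= x -> x < y -> y <= 1 -> F y < F x)).
  { apply inj_cont_dich. lra.
    - intros t Ht e He. destruct (Hc (embI t) e He) as [d [Hd Hd']]. exists d. split; auto.
      intros t' Ht' Htd. unfold F.
      pose proof (Hd' (embI t')) as H0. rewrite !distI in H0. rewrite !vI_embI in H0 by auto.
      rewrite Rabs_minus_sym. apply H0. rewrite Rabs_minus_sym; auto.
    - intros x y Hx Hy E. unfold F in E. apply ptI_eq in E.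
      assert (embI x = embI y) by (rewrite <- (Hl (embI x)), E; auto).
      rewrite <- (vI_embI x), <- (vI_embI y) by auto. rewrite H; auto. }
  destruct HF as [HF|HF]; [left|right]; intros x y Hxy;
  pose proof (vI_range x); pose proof (vI_range y);
  rewrite <- (embI_v x), <- (embI_v y); apply HF; lra.
Qed.

Lemma homeoI_le (g gi : pt Interval -> pt Interval) :
  inverse_of Interval g gi -> continuous_on Interval g ->
  (forall x y, vI x <= vI y -> vI (g x) <= vI (g y)) \/
  (forall x y, vI x <= vI y -> vI (g y) <= vI (g x)).
Proof.
  intros Hi Hc. destruct (homeoI_mono g gi Hi Hc) as [H|H]; [left|right]; intros x y [Hxy|Hxy].
  - left; auto.
  - apply ptI_eq in Hxy. subst; lra.
  - left; auto.
  - apply ptI_eq in Hxy. subst; lra.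
Qed.

Definition zero_cost {A : Type} (a : A) : R := 0.

Lemma hyps_zero {A : Type} k act inv (c : A -> R) q : hyps k act inv c q -> hyps k act inv zero_cost q.
Proof. intros []. constructor; auto; unfold zero_cost; intros; lra. Qed.

Lemma Dser_eq {A : Type} k act inv (c : A -> R) q (rel : A -> A -> Prop) :
  hyps k act inv c q ->
  (forall j a b, (j < k)%nat -> rel a b -> rel (act j a) (act j b)) ->
  (forall a b, rel a b -> c a = c b) ->
  forall a b, rel a b -> Dser k act inv c q a = Dser k act inv c q b.
Proof.
  intros H Hact Hc a b Hr.
  assert (E := Dser_rel k act inv (fun a z b => rel a b /\ z = a) c zero_cost c q H (hyps_zero _ _ _ _ _ H) H).
  assert (Z : Dser k act inv zero_cost q a = 0).
  { unfold Dser. rewrite (Series_ext _ (fun n => 0 * (q ^ n * Rw k act inv c n None a))).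
    rewrite Series_scal_l. ring. intros n.
    assert (Rw k act inv zero_cost n None a = 0).
    { pose proof (Rw_rel k act inv (fun a b g => True) zero_cost zero_cost zero_cost) as X.
      assert (Xn := X ltac:(auto) ltac:(unfold zero_cost; intros; lra) n None a a a I).
      lra. }
    rewrite H0; ring. }
  specialize (E ltac:(intros j x z y Hj [H1 H2]; split; auto; subst; auto)
                ltac:(intros x z y [H1 H2]; unfold zero_cost; rewrite (Hc x y H1); ring) a a b (conj Hr eq_refl)).
  lra.
Qed.

Definition actI (g : nat -> pt Interval -> pt Interval) (j : nat) (p : pt Interval * pt Interval) :=
  (g j (fst p), g j (snd p)).
Definition cI (p : pt Interval * pt Interval) : R := Rabs (vI (fst p) - vI (snd p)).

Theorem interval_case k (g : nat -> pt Interval -> pt Interval) inv q :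
  (2 <= k)%nat ->
  (forall j, (j < k)%nat -> (inv j < k)%nat) ->
  (forall j, (j < k)%nat -> inv (inv j) = j) ->
  (forall j, (j < k)%nat -> inverse_of Interval (g j) (g (inv j))) ->
  (forall j, (j < k)%nat -> continuous_on Interval (g j)) ->
  0 < q <= 1 -> q * (INR k - 1) < 1 ->
  exists h hinv, is_homeo_with_inv Interval h hinv /\
    forall j, (j < k)%nat -> lipschitz_with Interval (/ q) (fun x => h (g j (hinv x))).
Proof.
  intros Hk Hinv Hii Hgi Hgc Hq Hqk.
  assert (Hh : hyps k (actI g) inv cI q).
  { constructor; auto; intros [x y]; unfold cI; simpl; pose proof (vI_range x); pose proof (vI_range y).
    apply Rabs_pos. unfold Rabs; destruct Rcase_abs; lra. }
  set (D := fun x y => Dser k (actI g) inv cI q (x, y)).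
  assert (Dpos : forall x y, 0 <= D x y) by (intros; apply (Dser_nonneg _ _ _ _ _ Hh)).
  assert (Dge : forall x y, Rabs (vI x - vI y) <= D x y) by (intros; apply (Dser_ge_c _ _ _ _ _ Hh (x,y))).
  assert (Dsym : forall x y, D x y = D y x).
  { intros x y. apply (Dser_eq _ _ _ _ _ (fun a b => b = (snd a, fst a)) Hh).
    - intros j [a1 a2] [b1 b2] Hj E. injection E; intros; subst. reflexivity.
    - intros [a1 a2] [b1 b2] E. injection E; intros; subst. unfold cI; simpl. apply Rabs_minus_sym.
    - reflexivity. }
  assert (Dadd : forall x y z, vI x <= vI y <= vI z -> D x z = D x y + D y z).
  { intros x y z Hb. symmetry.
    apply (Dser_rel _ _ _ (fun a b c => exists x y z, a = (x, y) /\ b = (y, z) /\ c = (x, z) /\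
            ((vI x <= vI y <= vI z) \/ (vI z <= vI y <= vI x))) cI cI cI q Hh Hh Hh).
    - intros j a b c Hj [x0 [y0 [z0 [-> [-> [-> Hb0]]]]]].
      exists (g j x0), (g j y0), (g j z0). unfold actI; simpl. do 3 (split; auto).
      destruct (homeoI_le (g j) (g (inv j)) (Hgi j Hj) (Hgc j Hj)) as [Hm|Hm].
      + destruct Hb0 as [[? ?]|[? ?]]; [left|right]; split; apply Hm; auto.
      + destruct Hb0 as [[? ?]|[? ?]]; [right|left]; split; apply Hm; auto.
    - intros a b c [x0 [y0 [z0 [-> [-> [-> Hb0]]]]]]. unfold cI; simpl.
      destruct Hb0 as [[? ?]|[? ?]]; unfold Rabs; repeat destruct Rcase_abs; lra.
    - exists x, y, z. auto. }
  assert (Dact : forall j x y, (j < k)%nat -> D (g j x) (g j y) <= / q * D x y).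
  { intros j x y Hj.
    assert (Hai : forall a, actI g (inv j) (actI g j a) = a).
    { intros [a b]. unfold actI; simpl. destruct (Hgi j Hj) as [H1 H2]. rewrite !H1. auto. }
    exact (Dser_act _ _ _ _ _ Hh j Hj (Hii j Hj) Hai (x, y)). }
  assert (Dsmall : forall x e, 0 < e -> exists d, 0 < d /\ forall u w,
            dist Interval x u < d -> dist Interval x w < d -> D u w < e).
  { intros x e He.
    destruct (Dser_small k (actI g) inv cI q g
      (fun x d p => dist Interval x (fst p) < d /\ dist Interval x (snd p) < d) Hh) with (x := x) (e := e)
      as [d [Hd Hd']]; auto.
    - intros x0 d1 d2 a Hd12 [H1 H2]; split; lra.
    - intros x0 e0 He0. exists (e0 / 2). split; [lra|]. intros [u w] [H1 H2]; cbn [fst snd] in *.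
      unfold cI; simpl. rewrite distI in H1, H2.
      replace (vI u - vI w) with ((vI x0 - vI w) - (vI x0 - vI u)) by ring.
      eapply Rle_lt_trans. apply Rabs_triang. rewrite Rabs_Ropp. lra.
    - intros j x0 e0 Hj He0. destruct (Hgc j Hj x0 e0 He0) as [d [Hd Hd']].
      exists d. split; auto. intros [u w] [H1 H2]; cbn [fst snd] in *. split; apply Hd'; auto.
    - exists d. split; auto. intros u w H1 H2. apply (Hd' (u, w)). split; auto. }
  set (p0 := embI 0). set (p1 := embI 1).
  assert (Hp0 : vI p0 = 0) by (apply vI_embI; lra).
  assert (Hp1 : vI p1 = 1) by (apply vI_embI; lra).
  set (Z := D p0 p1).
  assert (HZ : 1 <= Z).
  { pose proof (Dge p0 p1). rewrite Hp0, Hp1 in H. unfold Z. rewrite Rabs_minus_sym in H.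
    rewrite Rabs_pos_eq in H; lra. }
  assert (D0 : forall x, D x x = 0).
  { intros x. pose proof (Dadd x x x ltac:(lra)). lra. }
  set (hv := fun x => D p0 x / Z).
  assert (Hhv : forall x, 0 <= hv x <= 1).
  { intros x. unfold hv. pose proof (vI_range x). split.
    apply Rdiv_le_0_compat; [apply Dpos|lra].
    apply Rmult_le_reg_r with Z. lra. unfold Rdiv. rewrite Rmult_assoc, Rinv_l, Rmult_1_r, Rmult_1_l by lra.
    unfold Z. rewrite (Dadd p0 x p1) by lra. pose proof (Dpos x p1). lra. }
  assert (Hdiff : forall x y, Rabs (hv x - hv y) = D x y / Z).
  { intros x y. unfold hv. pose proof (vI_range x). pose proof (vI_range y).
    destruct (Rle_dec (vI x) (vI y)).
    - rewrite (Dadd p0 x y) by lra. rewrite Rabs_minus_sym.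
      replace ((D p0 x + D x y) / Z - D p0 x / Z) with (D x y / Z) by (field; lra).
      apply Rabs_pos_eq. apply Rdiv_le_0_compat; [apply Dpos|lra].
    - rewrite (Dadd p0 y x) by lra. rewrite (Dsym x y).
      replace ((D p0 y + D y x) / Z - D p0 y / Z) with (D y x / Z) by (field; lra).
      apply Rabs_pos_eq. apply Rdiv_le_0_compat; [apply Dpos|lra]. }
  set (h := fun x => embI (hv x)).
  assert (Hvh : forall x, vI (h x) = hv x) by (intros; apply vI_embI; auto).
  assert (Hdh : forall x y, dist Interval (h x) (h y) = D x y / Z).
  { intros. rewrite distI, !Hvh. apply Hdiff. }
  assert (Hsurj : forall u, exists x, h x = u).
  { intros u. pose proof (vI_range u) as Hu.
    assert (exists x, hv x = vI u).
    { destruct (Req_dec (vI u) 0) as [E|E].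
      - exists p0. unfold hv. rewrite D0. rewrite E. unfold Rdiv. ring.
      - destruct (Req_dec (vI u) 1) as [E'|E'].
        + exists p1. unfold hv. rewrite E'. change (D p0 p1) with Z. apply Rdiv_diag. lra.
        + destruct (IVT_interv (fun t => hv (embI t) - vI u) 0 1) as [z [Hz Hz']].
          * intros t _. apply cont_pt_of. intros e He.
            destruct (Dsmall (embI t) (e * Z)) as [d [Hd Hd']]. nra.
            exists d. split; auto. intros t' Ht'.
            replace (hv (embI t') - vI u - (hv (embI t) - vI u)) with (hv (embI t') - hv (embI t)) by ring.
            rewrite Hdiff. apply Rmult_lt_reg_r with Z. lra.
            unfold Rdiv. rewrite Rmult_assoc, Rinv_l, Rmult_1_r by lra.
            apply Hd'.
            rewrite distI. unfold embI, vI; simpl. eapply Rle_lt_trans. apply cl_lip. rewrite Rabs_minus_sym; auto.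
            rewrite distI; unfold Rminus; rewrite Rplus_opp_r, Rabs_R0; auto.
          * lra.
          * simpl. replace (embI 0) with p0 by reflexivity. unfold hv. rewrite D0. unfold Rdiv. lra.
          * replace (embI 1) with p1 by reflexivity. unfold hv. fold Z. rewrite Rdiv_diag by lra. lra.
          * exists (embI z). lra. }
    destruct H as [x Hx]. exists x. apply ptI_eq. rewrite Hvh; auto. }
  assert (Hinj : forall x y, h x = h y -> x = y).
  { intros x y E. assert (dist Interval (h x) (h y) = 0) by (rewrite E, distI; unfold Rminus; rewrite Rplus_opp_r; apply Rabs_R0).
    rewrite Hdh in H. assert (D x y = 0). { apply Rmult_eq_reg_r with (/ Z). rewrite Rmult_0_l. exact H.
      apply Rinv_neq_0_compat. lra. }
    pose proof (Dge x y). rewrite H0 in H1. apply ptI_eq. pose proof (Rabs_pos (vI x - vI y)).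
    assert (Rabs (vI x - vI y) = 0) by lra. apply Rabs_eq_0 in H3. lra. }
  set (hinv := fun u => epsilon (inhabits p0) (fun x => h x = u)).
  assert (Hr : forall u, h (hinv u) = u).
  { intros u. unfold hinv. apply (epsilon_spec (inhabits p0) (fun x => h x = u)). apply Hsurj. }
  assert (Hl : forall x, hinv (h x) = x) by (intros; apply Hinj; apply Hr).
  exists h, hinv. split; [split; [split; auto|split]|].
  - intros x e He. destruct (Dsmall x (e * Z)) as [d [Hd Hd']]. nra.
    exists d. split; auto. intros y Hy. rewrite Hdh. apply Rmult_lt_reg_r with Z. lra.
    unfold Rdiv. rewrite Rmult_assoc, Rinv_l, Rmult_1_r by lra. apply Hd'; auto.
    rewrite distI; unfold Rminus; rewrite Rplus_opp_r, Rabs_R0; auto.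
  - intros u e He. exists (e / Z). split. apply Rdiv_lt_0_compat; lra.
    intros w Hw. rewrite <- (Hr u), <- (Hr w) in Hw. rewrite Hdh in Hw.
    rewrite distI. eapply Rle_lt_trans. apply Dge.
    apply Rmult_lt_reg_r with (/ Z). apply Rinv_0_lt_compat; lra. exact Hw.
  - intros j Hj x y. rewrite Hdh. rewrite <- (Hr x), <- (Hr y) at 2. rewrite Hdh.
    pose proof (Dact j (hinv x) (hinv y) Hj). unfold Rdiv. rewrite <- Rmult_assoc.
    apply Rmult_le_compat_r. left; apply Rinv_0_lt_compat; lra. auto.
Qed.

Definition vC (x : pt Circle) : R := proj1_sig x.

Lemma ptC_eq (x y : pt Circle) : vC x = vC y -> x = y.
Proof. destruct x, y. unfold vC; simpl. intros ->. f_equal. apply proof_irrelevance. Qed.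

Lemma vC_range x : I01 (vC x).
Proof. destruct x; simpl; auto. Qed.

Definition wrapv (s : R) : R :=
  if Rlt_dec s 1 then (if Rle_dec 0 s then s else 0)
  else (if Rlt_dec (s - 1) 1 then (if Rle_dec 0 (s - 1) then s - 1 else 0) else 0).

Lemma wrapv_range s : 0 <= wrapv s < 1.
Proof. unfold wrapv. repeat destruct Rlt_dec; repeat destruct Rle_dec; lra. Qed.

Definition embC (s : R) : pt Circle := exist _ (wrapv s) (wrapv_range s).

Lemma vC_embC s : vC (embC s) = wrapv s.
Proof. reflexivity. Qed.

Lemma wrapv_id s : 0 <= s < 1 -> wrapv s = s.
Proof. intros; unfold wrapv. repeat destruct Rlt_dec; repeat destruct Rle_dec; lra. Qed.

Lemma wrapv_1 s : 1 <= s < 2 -> wrapv s = s - 1.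
Proof. intros; unfold wrapv. repeat destruct Rlt_dec; repeat destruct Rle_dec; lra. Qed.

Lemma wrapv_cases s : 0 <= s < 2 -> wrapv s = s \/ wrapv s = s - 1.
Proof. intros; unfold wrapv. repeat destruct Rlt_dec; repeat destruct Rle_dec; lra. Qed.

Definition lam (x y : pt Circle) := lamR (vC x) (vC y).
Definition cyc (x y z : pt Circle) := cycR (vC x) (vC y) (vC z).

Lemma distC x y : dist Circle x y = Rmin (lam x y) (lam y x).
Proof. unfold lam. rewrite <- lamR_dist by apply vC_range. reflexivity. Qed.

Lemma distC_abs x y : dist Circle x y = Rmin (Rabs (vC x - vC y)) (1 - Rabs (vC x - vC y)).
Proof. reflexivity. Qed.

Lemma dist_shift_le a b s s' : I01 a -> I01 b ->
  ((a - b) - (s - s') = 0 \/ (a - b) - (s - s') = 1 \/ (a - b) - (s - s') = -1) ->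
  Rmin (Rabs (a - b)) (1 - Rabs (a - b)) <= Rabs (s - s').
Proof.
  unfold I01; intros Ha Hb H. unfold Rmin, Rabs.
  repeat match goal with |- context [Rcase_abs ?x] => destruct (Rcase_abs x) end;
  repeat match goal with |- context [Rle_dec ?a ?b] => destruct (Rle_dec a b) end; lra.
Qed.

Lemma dist_embC s s' : 0 <= s < 2 -> 0 <= s' < 2 -> dist Circle (embC s) (embC s') <= Rabs (s - s').
Proof.
  intros Hs Hs'. rewrite distC_abs. rewrite !vC_embC. apply dist_shift_le; try apply wrapv_range.
  destruct (wrapv_cases s Hs) as [-> | ->]; destruct (wrapv_cases s' Hs') as [-> | ->]; lra.
Qed.

Lemma dist_small_abs A B m : I01 A -> I01 B -> 0 < m -> m <= A -> m <= 1 - A ->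
  Rmin (Rabs (A - B)) (1 - Rabs (A - B)) < m -> Rabs (A - B) < m.
Proof.
  unfold I01; intros. unfold Rmin, Rabs in *.
  repeat match goal with H : context [Rcase_abs ?x] |- _ => destruct (Rcase_abs x) end;
  repeat match goal with |- context [Rcase_abs ?x] => destruct (Rcase_abs x) end;
  repeat match goal with H : context [Rle_dec ?a ?b] |- _ => destruct (Rle_dec a b) end; lra.
Qed.

Theorem circ_orient (g gi : pt Circle -> pt Circle) :
  inverse_of Circle g gi -> continuous_on Circle g ->
  (forall x y z, cyc x y z -> cyc (g x) (g y) (g z)) \/
  (forall x y z, cyc x y z -> cyc (g z) (g y) (g x)).
Proof.
  intros [Hl Hr] Hc.
  set (o := embC 0).
  assert (Ho : vC o = 0) by (unfold o; rewrite vC_embC; apply wrapv_id; lra).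
  set (p := gi o).
  assert (Hgp : g p = o) by (unfold p; auto).
  pose proof (vC_range p) as Hp. unfold I01 in Hp.
  set (sig := fun x => lamR (vC p) (vC x)).
  set (pto := fun t => embC (vC p + t)).
  assert (Hsig_r : forall x, I01 (sig x)) by (intros; apply lamR_range; apply vC_range).
  assert (Hpto : forall x, pto (sig x) = x).
  { intros x. apply ptC_eq. unfold pto, sig. rewrite vC_embC. pose proof (vC_range x). unfold I01 in H.
    unfold lamR. destruct Rle_dec.
    - rewrite wrapv_id; lra.
    - rewrite wrapv_1; lra. }
  assert (Hsig_pto : forall t, I01 t -> sig (pto t) = t).
  { intros t Ht. unfold I01 in Ht. unfold sig, pto. rewrite vC_embC. unfold lamR.
    destruct (Rlt_dec (vC p + t) 1).
    - rewrite wrapv_id by lra. destruct Rle_dec; lra.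
    - rewrite wrapv_1 by lra. destruct Rle_dec; lra. }
  set (Phi := fun t => vC (g (pto t))).
  assert (HgPhi : forall x, vC (g x) = Phi (sig x)) by (intros; unfold Phi; rewrite Hpto; auto).
  assert (Hcyc : forall x y z, cyc x y z <-> cycR (sig x) (sig y) (sig z)).
  { intros x y z. unfold cyc, cycR, sig.
    pose proof (vC_range x). pose proof (vC_range y). pose proof (vC_range z).
    assert (E1 : lamR (vC x) (vC y) = lamR (lamR (vC p) (vC x)) (lamR (vC p) (vC y))).
    { apply lamR_shift; auto; try apply lamR_range; auto. unfold I01 in *. lamc; lra. }
    assert (E2 : lamR (vC x) (vC z) = lamR (lamR (vC p) (vC x)) (lamR (vC p) (vC z))).
    { apply lamR_shift; auto; try apply lamR_range; auto. unfold I01 in *. lamc; lra. }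
    rewrite E1, E2. tauto. }
  assert (HPhi0 : Phi 0 = 0).
  { unfold Phi. replace (pto 0) with p. rewrite Hgp. auto.
    apply ptC_eq. unfold pto. rewrite vC_embC, Rplus_0_r, wrapv_id; lra. }
  assert (HPhi_range : forall t, I01 t -> I01 (Phi t)) by (intros; apply vC_range).
  assert (HPhi_inj : forall t t', I01 t -> I01 t' -> Phi t = Phi t' -> t = t').
  { intros t t' Ht Ht' E. unfold Phi in E. apply ptC_eq in E.
    assert (pto t = pto t') by (rewrite <- (Hl (pto t)), E; auto).
    rewrite <- (Hsig_pto t Ht), <- (Hsig_pto t' Ht'). rewrite H; auto. }
  assert (HPhi_pos : forall t, 0 < t < 1 -> 0 < Phi t < 1).
  { intros t Ht. pose proof (HPhi_range t ltac:(unfold I01; lra)). unfold I01 in H.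
    split; [|lra]. destruct (Req_dec (Phi t) 0) as [E|E]; [|lra].
    rewrite <- HPhi0 in E. apply HPhi_inj in E; unfold I01; lra. }
  assert (HPc : forall a b, 0 < a -> b < 1 -> forall t, a <= t <= b -> forall e, 0 < e -> exists d, 0 < d /\
     forall t', a <= t' <= b -> Rabs (t' - t) < d -> Rabs (Phi t' - Phi t) < e).
  { intros a b Ha Hb t Ht e He.
    pose proof (HPhi_pos t ltac:(lra)) as HPt.
    set (m := Rmin e (Rmin (Phi t) (1 - Phi t))).
    assert (Hm : 0 < m) by (unfold m; repeat apply Rmin_glb_lt; lra).
    destruct (Hc (pto t) m Hm) as [d [Hd Hd']].
    exists d. split; auto. intros t' Ht' Htd.
    assert (dist Circle (pto t) (pto t') < d).
    { eapply Rle_lt_trans. apply dist_embC; lra. rewrite Rabs_minus_sym.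
      replace (vC p + t' - (vC p + t)) with (t' - t) by ring. auto. }
    specialize (Hd' _ H). rewrite distC_abs in Hd'. fold (Phi t) (Phi t') in Hd'.
    rewrite Rabs_minus_sym. apply Rlt_le_trans with m; [|apply Rmin_l].
    apply dist_small_abs; auto; try apply HPhi_range; unfold I01; try lra.
    unfold m. eapply Rle_trans. apply Rmin_r. apply Rmin_l.
    unfold m. eapply Rle_trans. apply Rmin_r. apply Rmin_r. }
  assert (HPinj' : forall a b, 0 < a -> b < 1 -> forall x y, a <= x <= b -> a <= y <= b -> Phi x = Phi y -> x = y).
  { intros a b Ha Hb x y Hx Hy E. apply HPhi_inj; auto; unfold I01; lra. }
  assert (Hmono : (forall x y, 0 < x -> x < y -> y < 1 -> Phi x < Phi y) \/
                  (forall x y, 0 < x -> x < y -> y < 1 -> Phi y < Phi x)).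
  { destruct (Rtotal_order (Phi (1/3)) (Phi (2/3))) as [Hlt|[Heq|Hgt]].
    - left. intros x y Hx Hxy Hy.
      pose proof (Rmin_l x (1/3)). pose proof (Rmin_r x (1/3)). pose proof (Rmax_l y (2/3)). pose proof (Rmax_r y (2/3)).
      set (a := Rmin x (1/3)) in *. set (b := Rmax y (2/3)) in *.
      assert (Ha : 0 < a) by (unfold a; apply Rmin_glb_lt; lra).
      assert (Hb : b < 1) by (unfold b; apply Rmax_lub_lt; lra).
      apply (inj_cont_mono Phi a b (HPc a b Ha Hb) (HPinj' a b Ha Hb) (1/3) (2/3) x y); lra.
    - apply HPhi_inj in Heq; unfold I01; lra.
    - right. intros x y Hx Hxy Hy.
      pose proof (Rmin_l x (1/3)). pose proof (Rmin_r x (1/3)). pose proof (Rmax_l y (2/3)). pose proof (Rmax_r y (2/3)).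
      set (a := Rmin x (1/3)) in *. set (b := Rmax y (2/3)) in *.
      assert (Ha : 0 < a) by (unfold a; apply Rmin_glb_lt; lra).
      assert (Hb : b < 1) by (unfold b; apply Rmax_lub_lt; lra).
      destruct (Rtotal_order (Phi y) (Phi x)) as [?|[E|?]]; auto.
      + apply HPhi_inj in E; unfold I01; lra.
      + exfalso. assert (Phi (1/3) < Phi (2/3)).
        { apply (inj_cont_mono Phi a b (HPc a b Ha Hb) (HPinj' a b Ha Hb) x y (1/3) (2/3)); lra. }
        lra. }
  destruct Hmono as [Hm|Hm]; [left|right]; intros x y z Hxyz; apply Hcyc in Hxyz; unfold cyc; rewrite !HgPhi.
  - apply cycR_incr0; auto.
  - apply cycR_decr0; auto.
Qed.

Lemma distC_self x : dist Circle x x = 0.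
Proof. rewrite distC. unfold lam. rewrite lamR_0. apply Rmin_left; lra. Qed.

Lemma distC_sym x y : dist Circle x y = dist Circle y x.
Proof. rewrite !distC. apply Rmin_comm. Qed.

Lemma distC_tri x y z : dist Circle x z <= dist Circle x y + dist Circle y z.
Proof.
  rewrite !distC_abs. pose proof (vC_range x). pose proof (vC_range y). pose proof (vC_range z).
  unfold I01 in *. set (a := vC x) in *. set (b := vC y) in *. set (c := vC z) in *.
  unfold Rmin, Rabs.
  repeat match goal with |- context [Rcase_abs ?x] => destruct (Rcase_abs x) end;
  repeat match goal with |- context [Rle_dec ?a ?b] => destruct (Rle_dec a b) end; lra.
Qed.

Lemma distC_zero x y : dist Circle x y = 0 -> x = y.
Proof.
  rewrite distC_abs. pose proof (vC_range x). pose proof (vC_range y). unfold I01 in *.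
  intros E. apply ptC_eq. revert E. unfold Rmin, Rabs.
  repeat match goal with |- context [Rcase_abs ?x] => destruct (Rcase_abs x) end;
  repeat match goal with |- context [Rle_dec ?a ?b] => destruct (Rle_dec a b) end; lra.
Qed.

Lemma distC_pos x y : x <> y -> 0 < dist Circle x y.
Proof.
  intros H. rewrite distC. unfold lam.
  assert (vC x <> vC y) by (intros E; apply H, ptC_eq, E).
  apply Rmin_glb_lt; apply lamR_pos; auto; apply vC_range.
Qed.

Lemma lam_compl x y : x <> y -> lam x y + lam y x = 1.
Proof. intros H. apply lamR_compl. intros E; apply H, ptC_eq, E. Qed.

Lemma lam_range x y : 0 <= lam x y < 1.
Proof. apply lamR_range; apply vC_range. Qed.

Lemma cyc_add x y z : cyc x y z -> lam x y + lam y z = lam x z.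
Proof. apply cycR_add; apply vC_range. Qed.

Lemma cyc_not_both x y z : x <> y -> y <> z -> x <> z -> cyc x y z -> cyc z y x -> False.
Proof.
  intros H1 H2 H3 C1 C2. apply cyc_add in C1. apply cyc_add in C2.
  pose proof (lam_compl _ _ H1). pose proof (lam_compl _ _ H2). pose proof (lam_compl _ _ H3). lra.
Qed.

Lemma lam_self x : lam x x = 0.
Proof. apply lamR_0. Qed.

Lemma lam_small A B U Z0 e L :
  lam A B <= L -> (L = lam U Z0 \/ L = lam Z0 U) ->
  dist Circle A B < e -> e <= dist Circle U Z0 -> lam A B < e.
Proof.
  intros HL HLe Hd He. rewrite distC in Hd, He.
  destruct (Req_dec (lam A B) 0) as [E|E].
  - rewrite E. pose proof (lam_range A B). pose proof (lam_range B A). unfold Rmin in Hd. destruct Rle_dec; lra.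
  - assert (A <> B) by (intros ->; rewrite lam_self in E; lra).
    pose proof (lam_compl _ _ H).
    destruct (Rlt_dec (lam A B) e) as [|Hn]; auto. exfalso.
    assert (lam B A < e) by (unfold Rmin in Hd; destruct Rle_dec; lra).
    assert (U <> Z0).
    { intros ->. destruct HLe as [->| ->]; rewrite lam_self in HL;
      pose proof (lam_range A B); lra. }
    pose proof (lam_compl _ _ H2).
    unfold Rmin in He. destruct Rle_dec; destruct HLe; subst L; lra.
Qed.

Definition pres (g : pt Circle -> pt Circle) := forall x y z, cyc x y z -> cyc (g x) (g y) (g z).
Definition revs (g : pt Circle -> pt Circle) := forall x y z, cyc x y z -> cyc (g z) (g y) (g x).

Lemma test_triple : exists x y z, x <> y /\ y <> z /\ x <> z /\ cyc x y z.
Proof.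
  exists (embC 0), (embC (1/3)), (embC (2/3)).
  assert (E0 : vC (embC 0) = 0) by (rewrite vC_embC; apply wrapv_id; lra).
  assert (E1 : vC (embC (1/3)) = 1/3) by (rewrite vC_embC; apply wrapv_id; lra).
  assert (E2 : vC (embC (2/3)) = 2/3) by (rewrite vC_embC; apply wrapv_id; lra).
  split; [|split; [|split]].
  - intros E. apply (f_equal vC) in E. lra.
  - intros E. apply (f_equal vC) in E. lra.
  - intros E. apply (f_equal vC) in E. lra.
  - unfold cyc, cycR. rewrite E0, E1, E2. lamc; lra.
Qed.

Lemma not_pres_revs g : (forall x y, g x = g y -> x = y) -> pres g -> revs g -> False.
Proof.
  intros Hi Hp Hr. destruct test_triple as [x [y [z [H1 [H2 [H3 H]]]]]].
  apply (cyc_not_both (g x) (g y) (g z)); try (intros E; apply Hi in E); auto.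
Qed.

Lemma pres_inv g gi : inverse_of Circle g gi -> continuous_on Circle g -> continuous_on Circle gi ->
  (pres g <-> pres gi).
Proof.
  intros Hinv Hc Hci. assert (Hinv' : inverse_of Circle gi g) by (destruct Hinv; split; auto).
  destruct Hinv as [Hl Hr].
  destruct test_triple as [x [y [z [H1 [H2 [H3 H]]]]]].
  destruct (circ_orient g gi (conj Hl Hr) Hc) as [Pg|Rg];
  destruct (circ_orient gi g Hinv' Hci) as [Pgi|Rgi]; split; intros; auto.
  - exfalso. apply (cyc_not_both x y z); auto. specialize (Rgi x y z H). apply Pg in Rgi.
    rewrite !Hr in Rgi. auto.
  - exfalso. apply (cyc_not_both x y z); auto. specialize (Pgi x y z H). apply Rg in Pgi.
    rewrite !Hr in Pgi. auto.
  - exfalso. apply (not_pres_revs g); auto. intros a b E. rewrite <- (Hl a), <- (Hl b), E; auto.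
  - exfalso. apply (not_pres_revs gi); auto. intros a b E. rewrite <- (Hr a), <- (Hr b), E; auto.
Qed.

Lemma act_small (g gi : pt Circle -> pt Circle) (o : bool) :
  inverse_of Circle g gi -> continuous_on Circle g ->
  (o = true -> pres g) -> (o = false -> revs g) ->
  forall x e, 0 < e -> exists d, 0 < d /\ forall u w,
    dist Circle x u < d -> dist Circle x w < d -> lam u w < d ->
    dist Circle (g x) (fst (if o then (g u, g w) else (g w, g u))) < e /\
    dist Circle (g x) (snd (if o then (g u, g w) else (g w, g u))) < e /\
    lam (fst (if o then (g u, g w) else (g w, g u))) (snd (if o then (g u, g w) else (g w, g u))) < e.
Proof.
  intros [Hl Hr] Hc Ht Hf x e He.
  set (z := embC (vC x + 1/2)).
  assert (Hxz : dist Circle x z = 1/2).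
  { rewrite distC_abs. unfold z. rewrite vC_embC. pose proof (vC_range x). unfold I01 in H.
    destruct (Rlt_dec (vC x + 1/2) 1).
    - rewrite wrapv_id by lra. replace (vC x - (vC x + 1/2)) with (- (1/2)) by lra.
      rewrite Rabs_Ropp, Rabs_pos_eq by lra. apply Rmin_left; lra.
    - rewrite wrapv_1 by lra. replace (vC x - (vC x + 1/2 - 1)) with (1/2) by lra.
      rewrite Rabs_pos_eq by lra. apply Rmin_left; lra. }
  assert (Hgxz : g x <> g z).
  { intros E. assert (Exz : x = z) by (rewrite <- (Hl x), E; auto). rewrite <- Exz in Hxz. rewrite distC_self in Hxz. lra. }
  set (d0 := dist Circle (g x) (g z)).
  assert (Hd0 : 0 < d0) by (apply distC_pos; auto).
  set (eta := Rmin e d0 / 3).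
  assert (Heta : 0 < eta) by (unfold eta; apply Rdiv_lt_0_compat; [apply Rmin_glb_lt|]; lra).
  assert (Heta1 : eta <= e / 3) by (unfold eta; pose proof (Rmin_l e d0); lra).
  assert (Heta2 : eta <= d0 / 3) by (unfold eta; pose proof (Rmin_r e d0); lra).
  destruct (Hc x eta Heta) as [d1 [Hd1 Hd1']].
  exists (Rmin d1 (1/8)). split. apply Rmin_glb_lt; lra.
  intros u w Hu Hw Huw.
  pose proof (Rmin_l d1 (1/8)). pose proof (Rmin_r d1 (1/8)).
  assert (Hgu : dist Circle (g x) (g u) < eta) by (apply Hd1'; lra).
  assert (Hgw : dist Circle (g x) (g w) < eta) by (apply Hd1'; lra).
  assert (Hc1 : cyc u w z).
  { change (lam u w <= lam u z).
    assert (dist Circle u z <= lam u z) by (rewrite distC; apply Rmin_l).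
    pose proof (distC_tri x u z). lra. }
  assert (Huw2 : dist Circle (g u) (g w) < 2 * eta).
  { pose proof (distC_tri (g u) (g x) (g w)). rewrite (distC_sym (g u) (g x)) in H1. lra. }
  assert (Huz2 : 2 * eta <= dist Circle (g u) (g z)).
  { pose proof (distC_tri (g x) (g u) (g z)). fold d0 in H1. lra. }
  destruct o.
  - cbv beta iota; cbn [fst snd]. split; [lra|split; [lra|]].
    specialize (Ht eq_refl _ _ _ Hc1). unfold cyc, cycR in Ht. fold (lam (g u) (g w)) (lam (g u) (g z)) in Ht.
    apply Rlt_le_trans with (2 * eta); [|lra].
    apply (lam_small _ _ (g u) (g z) (2 * eta) (lam (g u) (g z))); auto.
  - cbv beta iota; cbn [fst snd]. split; [lra|split; [lra|]].
    specialize (Hf eq_refl _ _ _ Hc1). apply cyc_add in Hf.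
    pose proof (lam_range (g z) (g w)).
    apply Rlt_le_trans with (2 * eta); [|lra].
    apply (lam_small _ _ (g u) (g z) (2 * eta) (lam (g z) (g u))); auto. lra.
    rewrite distC_sym; auto.
Qed.

Theorem circle_case k (g : nat -> pt Circle -> pt Circle) inv q :
  (2 <= k)%nat ->
  (forall j, (j < k)%nat -> (inv j < k)%nat) ->
  (forall j, (j < k)%nat -> inv (inv j) = j) ->
  (forall j, (j < k)%nat -> inverse_of Circle (g j) (g (inv j))) ->
  (forall j, (j < k)%nat -> continuous_on Circle (g j)) ->
  0 < q <= 1 -> q * (INR k - 1) < 1 ->
  exists h hinv, is_homeo_with_inv Circle h hinv /\
    forall j, (j < k)%nat -> lipschitz_with Circle (/ q) (fun x => h (g j (hinv x))).
Proof.
  intros Hk Hinv Hii Hgi Hgc Hq Hqk.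
  set (ori := fun j => if excluded_middle_informative (pres (g j)) then true else false).
  assert (Hori_t : forall j, ori j = true -> pres (g j)).
  { intros j. unfold ori. destruct excluded_middle_informative; auto. discriminate. }
  assert (Hori_f : forall j, (j < k)%nat -> ori j = false -> revs (g j)).
  { intros j Hj. unfold ori. destruct excluded_middle_informative; [discriminate|].
    intros _. destruct (circ_orient (g j) (g (inv j)) (Hgi j Hj) (Hgc j Hj)); auto. contradiction. }
  assert (Hori_inv : forall j, (j < k)%nat -> ori (inv j) = ori j).
  { intros j Hj. pose proof (pres_inv (g j) (g (inv j)) (Hgi j Hj) (Hgc j Hj) (Hgc (inv j) (Hinv j Hj))).
    unfold ori. destruct excluded_middle_informative; destruct excluded_middle_informative; tauto. }
  assert (Hginj : forall j, (j < k)%nat -> forall x y, g j x = g j y -> x = y).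
  { intros j Hj x y E. destruct (Hgi j Hj) as [H1 _]. rewrite <- (H1 x), <- (H1 y), E; auto. }
  set (act := fun j (p : pt Circle * pt Circle) =>
    if ori j then (g j (fst p), g j (snd p)) else (g j (snd p), g j (fst p))).
  set (cC := fun p : pt Circle * pt Circle => lam (fst p) (snd p)).
  set (one := fun _ : pt Circle * pt Circle => 1).
  assert (Hh : hyps k act inv cC q).
  { constructor; auto; intros [x y]; unfold cC; pose proof (lam_range x y); simpl; lra. }
  assert (Hh1 : hyps k act inv one q).
  { constructor; auto; intros; unfold one; lra. }
  assert (Hact_inv : forall j, (j < k)%nat -> forall p, act (inv j) (act j p) = p).
  { intros j Hj [a b]. unfold act. rewrite (Hori_inv j Hj). destruct (Hgi j Hj) as [H1 _].
    destruct (ori j); simpl; rewrite !H1; auto. }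
  set (D := fun x y => Dser k act inv cC q (x, y)).
  set (o := embC 0).
  assert (Ho : vC o = 0) by (unfold o; rewrite vC_embC; apply wrapv_id; lra).
  set (Z := Dser k act inv one q (o, o)).
  assert (Dpos : forall x y, 0 <= D x y) by (intros; apply (Dser_nonneg _ _ _ _ _ Hh)).
  assert (Dge : forall x y, lam x y <= D x y) by (intros; apply (Dser_ge_c _ _ _ _ _ Hh (x,y))).
  assert (Dadd : forall x y z, cyc x y z -> D x z = D x y + D y z).
  { intros x y z Hb. symmetry.
    apply (Dser_rel _ _ _ (fun b c a => exists x y z, cyc x y z /\ a = (x, z) /\
            ((b = (x, y) /\ c = (y, z)) \/ (b = (y, z) /\ c = (x, y)))) cC cC cC q Hh Hh Hh).
    - intros j b c a Hj [x0 [y0 [z0 [Hc [-> Hbc]]]]].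
      destruct (ori j) eqn:Eo.
      + exists (g j x0), (g j y0), (g j z0). split. apply Hori_t; auto.
        unfold act; rewrite Eo; simpl. split; auto.
        destruct Hbc as [[-> ->]|[-> ->]]; [left|right]; auto.
      + exists (g j z0), (g j y0), (g j x0). split. apply (Hori_f j Hj Eo); auto.
        unfold act; rewrite Eo; simpl. split; auto.
        destruct Hbc as [[-> ->]|[-> ->]]; [right|left]; auto.
    - intros b c a [x0 [y0 [z0 [Hc [-> Hbc]]]]]. unfold cC.
      apply cyc_add in Hc. destruct Hbc as [[-> ->]|[-> ->]]; simpl; lra.
    - exists x, y, z. auto. }
  assert (D0 : forall x, D x x = 0).
  { intros x. pose proof (Dadd x x x ltac:(unfold cyc, cycR; lra)). lra. }
  assert (Dcomp : forall x y, x <> y -> D x y + D y x = Z).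
  { intros x y Hxy.
    apply (Dser_rel _ _ _ (fun b c a => c = (snd b, fst b) /\ fst b <> snd b) cC cC one q Hh Hh Hh1).
    - intros j b c a Hj [-> Hne]. unfold act. destruct (ori j); simpl; split; auto;
      intros E; apply Hne; apply (Hginj j Hj); auto.
    - intros b c a [-> Hne]. unfold cC, one. simpl. apply lam_compl; auto.
    - simpl; split; auto. }
  assert (Dact : forall j x y, (j < k)%nat ->
     Dser k act inv cC q (act j (x, y)) <= / q * D x y).
  { intros j x y Hj. exact (Dser_act _ _ _ _ _ Hh j Hj (Hii j Hj) (Hact_inv j Hj) (x, y)). }
  assert (Dsmall : forall x e, 0 < e -> exists d, 0 < d /\ forall u w,
            dist Circle x u < d -> dist Circle x w < d -> lam u w < d -> D u w < e).
  { intros x e He.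
    destruct (Dser_small k act inv cC q g
      (fun x d p => dist Circle x (fst p) < d /\ dist Circle x (snd p) < d /\ lam (fst p) (snd p) < d) Hh)
      with (x := x) (e := e) as [d [Hd Hd']]; auto.
    - intros x0 d1 d2 a Hd12 [H1 [H2 H3]]; repeat split; lra.
    - intros x0 e0 He0. exists e0. split; auto. intros [u w] [H1 [H2 H3]]. unfold cC. auto.
    - intros j x0 e0 Hj He0.
      destruct (act_small (g j) (g (inv j)) (ori j) (Hgi j Hj) (Hgc j Hj) (Hori_t j) (Hori_f j Hj) x0 e0 He0)
        as [d [Hd Hd']].
      exists d. split; auto. intros [u w] [H1 [H2 H3]]. cbn [fst snd] in *.
      unfold act; cbn [fst snd]. apply Hd'; auto.
    - exists d. split; auto. intros u w H1 H2 H3. apply (Hd' (u, w)). split; auto. }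
  assert (HZ : 1 <= Z).
  { set (y1 := embC (1/2)).
    assert (Hy1 : vC y1 = 1/2) by (unfold y1; rewrite vC_embC; apply wrapv_id; lra).
    assert (o <> y1) by (intros E; apply (f_equal vC) in E; lra).
    rewrite <- (Dcomp o y1 H). pose proof (lam_compl o y1 H). pose proof (Dge o y1). pose proof (Dge y1 o). lra. }
  set (hv := fun x => D o x / Z).
  assert (Hhv : forall x, 0 <= hv x < 1).
  { intros x. unfold hv. split. apply Rdiv_le_0_compat; [apply Dpos|lra].
    destruct (classic (x = o)) as [->|Hx]. rewrite D0. unfold Rdiv. lra.
    apply Rmult_lt_reg_r with Z. lra. unfold Rdiv. rewrite Rmult_assoc, Rinv_l, Rmult_1_r, Rmult_1_l by lra.
    pose proof (Dcomp o x (not_eq_sym Hx)). pose proof (Dge x o).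
    assert (0 < lam x o). { apply lamR_pos; try apply vC_range. intros E; apply Hx, ptC_eq, E. }
    lra. }
  assert (Hreal : forall x y, vC x <= vC y -> hv y - hv x = D x y / Z).
  { intros x y Hxy. unfold hv. rewrite (Dadd o x y). field. lra.
    unfold cyc, cycR. rewrite Ho. pose proof (vC_range x). pose proof (vC_range y). unfold I01 in *. lamc; lra. }
  set (h := fun x => embC (hv x)).
  assert (Hvh : forall x, vC (h x) = hv x) by (intros; unfold h; rewrite vC_embC; apply wrapv_id; auto).
  assert (Rmin_div : forall a b c, 0 < c -> Rmin (a / c) (b / c) = Rmin a b / c).
  { intros a b c Hc. unfold Rmin. destruct (Rle_dec (a / c) (b / c)); destruct (Rle_dec a b); auto.
    - exfalso. apply n. apply Rmult_le_reg_r with (/ c). apply Rinv_0_lt_compat; auto. auto.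
    - exfalso. apply n. apply Rmult_le_compat_r. left; apply Rinv_0_lt_compat; auto. auto. }
  assert (Hdh1 : forall x y, vC x <= vC y -> dist Circle (h x) (h y) = Rmin (D x y) (D y x) / Z).
  { intros x y Hxy. destruct (classic (x = y)) as [->|Hne].
    - rewrite distC_self, D0. rewrite Rmin_left by lra. unfold Rdiv; ring.
    - rewrite distC_abs, !Hvh. rewrite Rabs_minus_sym. rewrite Hreal by auto.
      rewrite Rabs_pos_eq by (apply Rdiv_le_0_compat; [apply Dpos|lra]).
      replace (1 - D x y / Z) with (D y x / Z). apply Rmin_div; lra.
      pose proof (Dcomp x y Hne). replace (D y x) with (Z - D x y) by lra. field. lra. }
  assert (Hdh : forall x y, dist Circle (h x) (h y) = Rmin (D x y) (D y x) / Z).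
  { intros x y. destruct (Rle_dec (vC x) (vC y)). apply Hdh1; auto.
    rewrite distC_sym, Rmin_comm. apply Hdh1. lra. }
  assert (Rmin_mono : forall a b c d, a <= c -> b <= d -> Rmin a b <= Rmin c d).
  { intros a b c d H1 H2. unfold Rmin. repeat destruct Rle_dec; lra. }
  assert (Rmin_scal : forall c a b, 0 < c -> Rmin (c * a) (c * b) = c * Rmin a b).
  { intros c a b Hc. unfold Rmin. destruct (Rle_dec (c * a) (c * b)); destruct (Rle_dec a b); auto.
    - exfalso. apply n. apply Rmult_le_reg_l with c; auto.
    - exfalso. apply n. apply Rmult_le_compat_l; lra. }
  assert (Hdl : forall x y, dist Circle x y <= Rmin (D x y) (D y x)).
  { intros x y. rewrite distC. apply Rmin_mono; apply Dge. }
  assert (Hsurj : forall u, exists x, h x = u).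
  { intros u. pose proof (vC_range u) as Hu. unfold I01 in Hu.
    assert (exists x, hv x = vC u).
    { destruct (Req_dec (vC u) 0) as [E|E].
      - exists o. unfold hv. rewrite D0, E. unfold Rdiv; ring.
      - destruct (Dsmall o ((1 - vC u) * Z)) as [d [Hd Hd']]. apply Rmult_lt_0_compat; lra.
        set (t := Rmax (1/2) (1 - d/2)).
        assert (Ht : 1/2 <= t < 1).
        { unfold t. split. apply Rmax_l. apply Rmax_lub_lt; lra. }
        set (y := embC t).
        assert (Hy : vC y = t) by (unfold y; rewrite vC_embC; apply wrapv_id; lra).
        assert (Hyo : y <> o) by (intros E0; apply (f_equal vC) in E0; lra).
        assert (Hlyo : lam y o < d).
        { unfold lam. rewrite Hy, Ho. unfold lamR. destruct Rle_dec; [lra|].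
          pose proof (Rmax_r (1/2) (1 - d/2)). fold t in H. lra. }
        assert (HDyo : D y o < (1 - vC u) * Z).
        { apply Hd'. rewrite distC. eapply Rle_lt_trans. apply Rmin_r. auto.
          rewrite distC_self; auto. auto. }
        assert (Hhy : vC u < hv y).
        { unfold hv. pose proof (Dcomp o y (not_eq_sym Hyo)).
          apply Rmult_lt_reg_r with Z. lra. unfold Rdiv. rewrite Rmult_assoc, Rinv_l, Rmult_1_r by lra. nra. }
        set (a := fun s => Rmax 0 (Rmin t s)).
        assert (Ha : forall s, 0 <= a s <= t).
        { intros s. unfold a, Rmax, Rmin. repeat destruct Rle_dec; lra. }
        assert (Halip : forall s s', Rabs (a s' - a s) <= Rabs (s' - s)).
        { intros s s'. unfold a, Rmax, Rmin, Rabs. repeat destruct Rle_dec; repeat destruct Rcase_abs; lra. }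
        assert (Hva : forall s, vC (embC (a s)) = a s).
        { intros s. rewrite vC_embC. apply wrapv_id. pose proof (Ha s). lra. }
        destruct (IVT_interv (fun s => hv (embC (a s)) - vC u) 0 t) as [z [Hz Hz']].
        + intros s _. apply cont_pt_of. intros e He.
          destruct (Dsmall (embC (a s)) (e * Z)) as [d1 [Hd1 Hd1']]. nra.
          exists d1. split; auto. intros s' Hs'.
          replace (hv (embC (a s')) - vC u - (hv (embC (a s)) - vC u)) with (hv (embC (a s')) - hv (embC (a s))) by ring.
          pose proof (Halip s s'). pose proof (Ha s). pose proof (Ha s').
          assert (Hdd : dist Circle (embC (a s)) (embC (a s')) < d1).
          { eapply Rle_lt_trans. apply dist_embC; lra. rewrite Rabs_minus_sym. lra. }
          assert (Hself : dist Circle (embC (a s)) (embC (a s)) < d1) by (rewrite distC_self; auto).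
          destruct (Rle_dec (a s) (a s')).
          * rewrite Hreal by (rewrite !Hva; auto).
            rewrite Rabs_pos_eq by (apply Rdiv_le_0_compat; [apply Dpos|lra]).
            apply Rmult_lt_reg_r with Z. lra. unfold Rdiv. rewrite Rmult_assoc, Rinv_l, Rmult_1_r by lra.
            apply Hd1'; auto. unfold lam. rewrite !Hva. unfold lamR. destruct Rle_dec; [|lra].
            pose proof (Rle_abs (a s' - a s)). pose proof (Rle_abs (a s - a s')).
            rewrite (Rabs_minus_sym (a s) (a s')) in *. lra.
          * replace (hv (embC (a s')) - hv (embC (a s))) with (- (hv (embC (a s)) - hv (embC (a s')))) by ring.
            rewrite Rabs_Ropp. rewrite Hreal by (rewrite !Hva; lra).
            rewrite Rabs_pos_eq by (apply Rdiv_le_0_compat; [apply Dpos|lra]).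
            apply Rmult_lt_reg_r with Z. lra. unfold Rdiv. rewrite Rmult_assoc, Rinv_l, Rmult_1_r by lra.
            apply Hd1'; auto. unfold lam. rewrite !Hva. unfold lamR. destruct Rle_dec; [|lra].
            pose proof (Rle_abs (a s' - a s)). pose proof (Rle_abs (a s - a s')).
            rewrite (Rabs_minus_sym (a s) (a s')) in *. lra.
        + lra.
        + replace (embC (a 0)) with o. unfold hv. rewrite D0. unfold Rdiv. lra.
          apply ptC_eq. rewrite Hva, Ho. unfold a, Rmax, Rmin. repeat destruct Rle_dec; lra.
        + replace (embC (a t)) with y. lra.
          apply ptC_eq. rewrite Hva, Hy. unfold a, Rmax, Rmin. repeat destruct Rle_dec; lra.
        + exists (embC (a z)). lra. }
    destruct H as [x Hx]. exists x. apply ptC_eq. rewrite Hvh; auto. }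
  assert (Hinj : forall x y, h x = h y -> x = y).
  { intros x y E. apply distC_zero. pose proof (Hdl x y). pose proof (distC_self (h x)).
    rewrite E in H0 at 2. rewrite Hdh in H0.
    assert (Rmin (D x y) (D y x) = 0).
    { apply Rmult_eq_reg_r with (/ Z). rewrite Rmult_0_l. exact H0. apply Rinv_neq_0_compat. lra. }
    rewrite distC in *. pose proof (lam_range x y). pose proof (lam_range y x).
    unfold Rmin in *. repeat destruct Rle_dec; lra. }
  set (hinv := fun u => epsilon (inhabits o) (fun x => h x = u)).
  assert (Hr : forall u, h (hinv u) = u).
  { intros u. unfold hinv. apply (epsilon_spec (inhabits o) (fun x => h x = u)). apply Hsurj. }
  assert (Hl : forall x, hinv (h x) = x) by (intros; apply Hinj; apply Hr).
  exists h, hinv. split; [split; [split; auto|split]|].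
  - intros x e He. destruct (Dsmall x (e * Z)) as [d [Hd Hd']]. nra.
    exists d. split; auto. intros y Hy. rewrite Hdh. apply Rmult_lt_reg_r with Z. lra.
    unfold Rdiv. rewrite Rmult_assoc, Rinv_l, Rmult_1_r by lra.
    pose proof (distC_self x). pose proof Hy as Hy0. rewrite distC in Hy. unfold Rmin in Hy. destruct Rle_dec.
    + eapply Rle_lt_trans. apply Rmin_l. apply Hd'; lra.
    + eapply Rle_lt_trans. apply Rmin_r. apply Hd'; try lra.
  - intros u e He. exists (e / Z). split. apply Rdiv_lt_0_compat; lra.
    intros w Hw. rewrite <- (Hr u), <- (Hr w) in Hw. rewrite Hdh in Hw.
    eapply Rle_lt_trans. apply Hdl.
    apply Rmult_lt_reg_r with (/ Z). apply Rinv_0_lt_compat; lra. exact Hw.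
  - intros j Hj x y. cbv beta. rewrite Hdh. replace (dist Circle x y) with (dist Circle (h (hinv x)) (h (hinv y))) by (rewrite !Hr; auto). rewrite Hdh.
    set (a := hinv x). set (b := hinv y).
    pose proof (Dact j a b Hj) as A1. pose proof (Dact j b a Hj) as A2.
    assert (Hq' : 0 < / q) by (apply Rinv_0_lt_compat; lra).
    assert (Rmin (D (g j a) (g j b)) (D (g j b) (g j a)) <= / q * Rmin (D a b) (D b a)).
    { rewrite <- Rmin_scal by auto. unfold act in A1, A2. destruct (ori j); simpl in A1, A2.
      - apply Rmin_mono; auto.
      - rewrite Rmin_comm. apply Rmin_mono; auto. }
    unfold Rdiv. rewrite <- Rmult_assoc.
    apply Rmult_le_compat_r. left; apply Rinv_0_lt_compat; lra. auto.
Qed.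

Lemma inverse_unique M (f g1 g2 : pt M -> pt M) :
  inverse_of M f g1 -> inverse_of M f g2 -> forall x, g1 x = g2 x.
Proof. intros [H1 H2] [H3 H4] x. rewrite <- (H4 x) at 1. rewrite H1. auto. Qed.

Lemma inverse_sym M (f g : pt M -> pt M) : inverse_of M f g -> inverse_of M g f.
Proof. intros [H1 H2]; split; auto. Qed.



Theorem mainTheorem1 (M : Manifold1) (gens : list (pt M -> pt M)) :
  (forall f, In f gens -> is_homeo M f) ->
  (forall f, In f gens -> exists g, In g gens /\ inverse_of M f g) ->
  (forall i j, (i < length gens)%nat -> (j < length gens)%nat -> i <> j ->
     exists x, nth i gens (fun y => y) x <> nth j gens (fun y => y) x) ->
  (2 <= length gens)%nat ->
  forall eps : R, ln (INR (length gens) - 1) < eps ->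
  exists h hinv : pt M -> pt M,
    is_homeo_with_inv M h hinv /\
    forall g, In g gens ->
      lipschitz_with M (exp eps) (fun x => h (g (hinv x))).
Proof.
  intros Hhom Hsym Hdist Hk eps Heps.
  set (k := length gens) in *.
  set (g := fun j => nth j gens (fun y : pt M => y)).
  set (P := fun j i => (i < k)%nat /\ inverse_of M (g j) (g i)).
  assert (HP : forall j, (j < k)%nat -> exists i, P j i).
  { intros j Hj. destruct (Hsym (g j)) as [f [Hf Hfi]]. apply nth_In; auto.
    destruct (In_nth gens f (fun y => y) Hf) as [i [Hi Ei]]. exists i. split; auto.
    unfold g. rewrite Ei. auto. }
  set (inv := fun j => epsilon (inhabits 0%nat) (P j)).
  assert (Hinv : forall j, (j < k)%nat -> P j (inv j)).
  { intros j Hj. apply (epsilon_spec (inhabits 0%nat) (P j)). apply HP; auto. }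
  assert (Hii : forall j, (j < k)%nat -> inv (inv j) = j).
  { intros j Hj. destruct (Hinv j Hj) as [H1 H2]. destruct (Hinv (inv j) H1) as [H3 H4].
    destruct (Nat.eq_dec (inv (inv j)) j) as [E|E]; auto. exfalso.
    destruct (Hdist _ _ H3 Hj E) as [x Hx]. apply Hx.
    apply (inverse_unique M (g (inv j))); auto. apply inverse_sym; auto. }
  assert (Hgc : forall j, (j < k)%nat -> continuous_on M (g j)).
  { intros j Hj. destruct (Hhom (g j)) as [gi [_ [Hc _]]]. apply nth_In; auto. auto. }
  set (q := exp (- eps)).
  assert (Hk1 : 1 <= INR k - 1) by (assert (2 <= INR k) by (apply (le_INR 2); auto); lra).
  assert (Heps0 : 0 < eps).
  { apply Rle_lt_trans with (ln (INR k - 1)); auto. rewrite <- ln_1. apply ln_le; lra. }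
  assert (Hq : 0 < q <= 1).
  { unfold q. split. apply exp_pos. rewrite <- exp_0. left. apply exp_increasing. lra. }
  assert (Hqk : q * (INR k - 1) < 1).
  { unfold q. rewrite exp_Ropp. rewrite <- (exp_ln (INR k - 1)) by lra.
    apply Rmult_lt_reg_l with (exp eps). apply exp_pos.
    rewrite <- Rmult_assoc, Rinv_r, Rmult_1_l, Rmult_1_r. apply exp_increasing; auto.
    apply Rgt_not_eq, exp_pos. }
  assert (Eq : / q = exp eps) by (unfold q; rewrite exp_Ropp; apply Rinv_inv).
  assert (Hinv' : forall j, (j < k)%nat -> (inv j < k)%nat) by (intros j Hj; apply Hinv; auto).
  assert (Hgi : forall j, (j < k)%nat -> inverse_of M (g j) (g (inv j))) by (intros j Hj; apply Hinv; auto).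
  assert (Hfin : exists h hinv, is_homeo_with_inv M h hinv /\
    forall j, (j < k)%nat -> lipschitz_with M (/ q) (fun x => h (g j (hinv x)))).
  { destruct M.
    - apply circle_case with (inv := inv); auto.
    - apply interval_case with (inv := inv); auto. }
  destruct Hfin as [h [hinv [Hh Hl]]]. exists h, hinv. split; auto.
  intros f Hf. destruct (In_nth gens f (fun y => y) Hf) as [j [Hj Ej]].
  rewrite <- Eq, <- Ej. apply (Hl j Hj).
Qed.
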